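(* Let $\mathcal Z$ be the set of zeros of $1-Q(z)$ of minimal modulus with $|z|\le\rho$. This set is either empty or has exactly one real positive element, called $\rho_0$. Let $\rho_D$ be the radius of convergence of $D(z)=1/(1-Q(z))$ and $\delta=P'(1)$. If $\delta\ge0$, then $\rho_D=\rho_0<\frac1{P(1)}\le\rho$. If $\delta<0$, then: $Q(\rho)>1$ if and only if $\rho_D=\rho_0<\rho$; $Q(\rho)=1$ if and only if $\rho_D=\rho_0=\rho$; $Q(\rho)<1$ if and only if $\rho_D=\rho$ and $\mathcal Z$ is empty.
   Context: Fix integers $c,d\ge1$ and non-negative real weights $p_{-c},\dots,p_d$ with $p_{-c}\neq0\neq p_d$; jump set $\mathcal J=\{i: p_i\neq0\}$, jump polynomial $P(u)=\sum_{i=-c}^dp_iu^i$. Standing assumption: $P$ is aperiodic (there are no integer $b$, integer $p\ge2$ and Laurent polynomial $H$ with $P(u)=u^bH(u^p)$). A catastrophe is a step from an altitude $h>0$ with $-h\notin\mathcal J$ directly to altitude $0$, of weight $q>0$. Let $M(z,u)=\sum m_{n,k}z^nu^k$, with $m_{n,k}$ the total weight (product of jump weights $p_i$) of paths of length $n$ using jumps from $\mathcal J$, starting at $0$, never going below $0$ and ending at altitude $k$; $M_k(z)=[u^k]M(z,u)$, $M(z)=M(z,1)$, $E(z)=M_0(z)$. Let $Q(z)=zq\big(M(z)-E(z)-\sum_{j>0,-j\in\mathcal J}M_j(z)\big)$. Let $\tau>0$ be the minimal positive real solution of $P'(\tau)=0$ and $\rho=1/P(\tau)$. *)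

(* Defs.v *)
From Stdlib Require Export Reals ZArith List Bool.
From Coquelicot Require Export Coquelicot.
Open Scope R_scope.

Section Walks.
(* c d : the jump range [-c, d];  p : the weights p_i (only i in [-c,d] used) *)
Variables (c d : nat) (p : Z -> R).

Definition pcoef (i : Z) : R :=
  if ((- Z.of_nat c <=? i) && (i <=? Z.of_nat d))%Z%bool then p i else 0.

Definition zsum (f : Z -> R) : R :=
  sum_f_R0 (fun k => f (- Z.of_nat c + Z.of_nat k)%Z) (c + d).

Definition Pjump (u : R) : R := zsum (fun i => p i * powerRZ u i).
Definition Pjump' (u : R) : R := zsum (fun i => IZR i * p i * powerRZ u (i - 1)).

(* aperiodicity: there are no b, per >= 2 and Laurent polynomial H with
   P(u) = u^b H(u^per)  (identity of Laurent polynomials, coefficientwise) *)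
Definition aperiodic : Prop :=
  ~ exists (b per : Z) (h : Z -> R),
      (2 <= per)%Z /\
      forall i : Z, pcoef i =
        (if Z.eqb ((i - b) mod per)%Z 0%Z then h ((i - b) / per)%Z else 0).

Definition jumps : list Z :=
  filter (fun i => if Req_dec_T (p i) 0 then false else true)
    (map (fun k => (- Z.of_nat c + Z.of_nat k)%Z) (seq 0 (S (c + d)))).

Fixpoint words (n : nat) : list (list Z) :=
  match n with
  | O => nil :: nil
  | S n' => flat_map (fun i => map (cons i) (words n')) jumps
  end.

Fixpoint stays_nonneg (h : Z) (w : list Z) : bool :=
  match w with
  | nil => true
  | i :: w' => ((0 <=? h + i)%Z && stays_nonneg (h + i) w')%bool
  end.

Definition endpoint (w : list Z) : Z := fold_right Z.add 0%Z w.
Definition weight (w : list Z) : R := fold_right (fun i acc => p i * acc) 1 w.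

Definition sumR (l : list R) : R := fold_right Rplus 0 l.

Definition mnk (n : nat) (k : Z) : R :=
  sumR (map weight
    (filter (fun w => (stays_nonneg 0 w && Z.eqb (endpoint w) k)%bool) (words n))).

Definition Mcoef (n : nat) : R :=
  sumR (map weight (filter (fun w => stays_nonneg 0 w) (words n))).

(* coefficients of Q(z) = z q (M(z) - E(z) - sum_{j>0, -j in J} M_j(z)) *)
Definition Qcoef (q : R) (n : nat) : R :=
  match n with
  | O => 0
  | S n' => q * (Mcoef n' - mnk n' 0
                 - sum_f_R0 (fun j => if Req_dec_T (p (- Z.of_nat (S j))%Z) 0
                                      then 0 else mnk n' (Z.of_nat (S j))) (c - 1))
  end.

Fixpoint Qpow (q : R) (k n : nat) : R :=
  match k with
  | O => if Nat.eqb n 0 then 1 else 0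
  | S k' => sum_f_R0 (fun i => Qcoef q i * Qpow q k' (n - i)) n
  end.

(* coefficients of D(z) = 1/(1 - Q(z)) = sum_k Q(z)^k  (Q(0) = 0) *)
Definition Dcoef (q : R) (n : nat) : R := sum_f_R0 (fun k => Qpow q k n) n.

Definition Q_is (q : R) (z w : C) : Prop :=
  is_series (fun n => (RtoC (Qcoef q n) * pow_n (K := C_Ring) z n)%C) w.

(* Q(x) in [0, +oo] for real x >= 0 (series with nonnegative terms) *)
Definition Qreal (q : R) (x : R) : Rbar :=
  Lim_seq (fun N => sum_f_R0 (fun n => Qcoef q n * x ^ n) N).

Definition zero_le (q rho : R) (z : C) : Prop :=
  Cmod z <= rho /\ Q_is q z (RtoC 1).

Definition Zset (q rho : R) (z : C) : Prop :=
  zero_le q rho z /\ forall w, zero_le q rho w -> Cmod z <= Cmod w.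

End Walks.

(* Main.v *)
Require Import Defs.
From Stdlib Require Import Lra Lia Psatz FunctionalExtensionality Classical.
Open Scope R_scope.



Lemma sum_nonneg_b (f : nat -> R) N : (forall j, (j <= N)%nat -> 0 <= f j) -> 0 <= sum_f_R0 f N.
Proof.
  induction N; intros H; simpl; [apply H; lia|].
  assert (0 <= sum_f_R0 f N) by (apply IHN; intros; apply H; lia).
  assert (0 <= f (S N)) by (apply H; lia). lra.
Qed.

Lemma sum_ge_term (f : nat -> R) N k : (forall j, (j <= N)%nat -> 0 <= f j) -> (k <= N)%nat ->
  f k <= sum_f_R0 f N.
Proof.
  induction N; intros H Hk.
  - simpl. replace k with 0%nat by lia. lra.
  - simpl. destruct (Nat.eq_dec k (S N)).
    + subst. assert (0 <= sum_f_R0 f N).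
      { apply sum_nonneg_b. intros; apply H; lia. } lra.
    + assert (f k <= sum_f_R0 f N) by (apply IHN; [intros; apply H; lia| lia]).
      assert (0 <= f (S N)) by (apply H; lia). lra.
Qed.

Lemma pow_S (x : R) n : x ^ S n = x * x ^ n.
Proof. reflexivity. Qed.

Section Comb.
Variables (c d : nat) (p : Z -> R).
Hypothesis Hc : (1 <= c)%nat.
Hypothesis Hd : (1 <= d)%nat.
Hypothesis Hp : forall i : Z, (- Z.of_nat c <= i <= Z.of_nat d)%Z -> 0 <= p i.
Hypothesis Hpd : p (Z.of_nat d) <> 0.

Definition Kop (f : Z -> R) (h : Z) : R :=
  zsum c d (fun i => if (0 <=? h + i)%Z then p i * f (h + i)%Z else 0).

Fixpoint V (n : nat) (f : Z -> R) (h : Z) : R :=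
  match n with O => f h | S n' => Kop (V n' f) h end.

Lemma zsum_ext f g : (forall i, (- Z.of_nat c <= i <= Z.of_nat d)%Z -> f i = g i) ->
  zsum c d f = zsum c d g.
Proof.
  intros H. unfold zsum. apply sum_eq. intros k Hk. apply H. lia.
Qed.

Lemma zsum_plus f g : zsum c d (fun i => f i + g i) = zsum c d f + zsum c d g.
Proof. unfold zsum. apply sum_plus. Qed.

Lemma zsum_scal a f : zsum c d (fun i => a * f i) = a * zsum c d f.
Proof. unfold zsum. rewrite scal_sum. apply sum_eq. intros; ring. Qed.

Lemma zsum_le f g : (forall i, (- Z.of_nat c <= i <= Z.of_nat d)%Z -> f i <= g i) ->
  zsum c d f <= zsum c d g.
Proof.
  intros H. unfold zsum. apply sum_Rle. intros k Hk. apply H. lia.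
Qed.

Lemma zsum_zero : zsum c d (fun _ => 0) = 0.
Proof. unfold zsum. induction (c + d)%nat; simpl; [lra|rewrite IHn; lra]. Qed.



Lemma zsum_nonneg f : (forall i, (- Z.of_nat c <= i <= Z.of_nat d)%Z -> 0 <= f i) -> 0 <= zsum c d f.
Proof. intros H. unfold zsum. apply sum_nonneg_b. intros j Hj. apply H. lia. Qed.

Lemma zsum_ge_d f : (forall i, (- Z.of_nat c <= i <= Z.of_nat d)%Z -> 0 <= f i) ->
  f (Z.of_nat d) <= zsum c d f.
Proof.
  intros H. unfold zsum.
  assert (E : (- Z.of_nat c + Z.of_nat (c + d))%Z = Z.of_nat d) by lia.
  rewrite <- E.
  apply sum_ge_term with (f := fun k => f (- Z.of_nat c + Z.of_nat k)%Z).
  - intros j Hj. apply H. lia.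
  - lia.
Qed.

Lemma Kop_ext f g h : (forall k, (0 <= k)%Z -> f k = g k) -> Kop f h = Kop g h.
Proof.
  intros H. unfold Kop. apply zsum_ext. intros i Hi.
  destruct (0 <=? h + i)%Z eqn:E; [|reflexivity].
  rewrite H; [reflexivity|]. apply Z.leb_le in E. lia.
Qed.

Lemma Kop_ext_all f g h : (forall k, f k = g k) -> Kop f h = Kop g h.
Proof.
  intros H. unfold Kop. apply zsum_ext. intros i Hi. rewrite H. reflexivity.
Qed.

Lemma Kop_mono f g h : (forall k, (0 <= k)%Z -> f k <= g k) -> Kop f h <= Kop g h.
Proof.
  intros H. unfold Kop. apply zsum_le. intros i Hi.
  destruct (0 <=? h + i)%Z eqn:E; [|lra].
  apply Rmult_le_compat_l; [apply Hp; lia|]. apply H. apply Z.leb_le in E. lia.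
Qed.

Lemma Kop_lin a b f g h : Kop (fun k => a * f k + b * g k) h = a * Kop f h + b * Kop g h.
Proof.
  unfold Kop. rewrite <- !zsum_scal, <- zsum_plus. apply zsum_ext. intros i _.
  destruct (0 <=? h + i)%Z; ring.
Qed.

Lemma V_ext n f g h : (forall k, (0 <= k)%Z -> f k = g k) -> (0 <= h)%Z -> V n f h = V n g h.
Proof.
  intros H. revert h. induction n; intros h Hh; simpl.
  - apply H; auto.
  - apply Kop_ext. intros; apply IHn; auto.
Qed.

Lemma V_ext_all n f g h : (forall k, f k = g k) -> V n f h = V n g h.
Proof.
  intros H. revert h. induction n; intros h; simpl.
  - apply H.
  - unfold Kop. apply zsum_ext. intros i _. rewrite IHn. reflexivity.
Qed.

Lemma V_mono n f g h : (forall k, (0 <= k)%Z -> f k <= g k) -> (0 <= h)%Z -> V n f h <= V n g h.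
Proof.
  intros H. revert h. induction n; intros h Hh; simpl.
  - apply H; auto.
  - apply Kop_mono. intros; apply IHn; auto.
Qed.

Lemma V_lin n a b f g h : V n (fun k => a * f k + b * g k) h = a * V n f h + b * V n g h.
Proof.
  revert h. induction n; intros h; simpl; [reflexivity|].
  rewrite <- Kop_lin. unfold Kop. apply zsum_ext. intros i _. rewrite IHn. reflexivity.
Qed.

Lemma V_const0 n h : V n (fun _ => 0) h = 0.
Proof.
  revert h; induction n; intros h; simpl; [reflexivity|].
  unfold Kop. transitivity (zsum c d (fun _ => 0)); [|apply zsum_zero].
  apply zsum_ext. intros i _. rewrite IHn.
  destruct (0 <=? h + i)%Z; ring.
Qed.

Lemma V_scal n a f h : V n (fun k => a * f k) h = a * V n f h.
Proof.
  rewrite (V_ext_all n _ (fun k => a * f k + 0 * (fun _ => 0) k)) by (intros; ring).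
  rewrite V_lin. ring.
Qed.

Lemma V_minus n f g h : V n (fun k => f k - g k) h = V n f h - V n g h.
Proof.
  rewrite (V_ext_all n _ (fun k => 1 * f k + (-1) * g k)) by (intros; ring).
  rewrite V_lin. ring.
Qed.

Lemma V_sum n (F : nat -> Z -> R) N h :
  V n (fun k => sum_f_R0 (fun j => F j k) N) h = sum_f_R0 (fun j => V n (F j) h) N.
Proof.
  induction N; simpl; [reflexivity|].
  rewrite (V_ext_all n _ (fun k => 1 * sum_f_R0 (fun j => F j k) N + 1 * F (S N) k)) by (intros; ring).
  rewrite V_lin, IHN. ring.
Qed.

Lemma V_nonneg n f h : (forall k, (0 <= k)%Z -> 0 <= f k) -> (0 <= h)%Z -> 0 <= V n f h.
Proof.
  intros H Hh. rewrite <- (V_const0 n h). apply V_mono; auto.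
Qed.

Lemma V_S n f h : V (S n) f h = V n (Kop f) h.
Proof.
  revert h. induction n; intros h; [reflexivity|].
  change (Kop (V (S n) f) h = Kop (V n (Kop f)) h).
  apply Kop_ext_all. intros; apply IHn.
Qed.

Lemma V_add n m f h : V (n + m) f h = V n (V m f) h.
Proof.
  revert h. induction n; intros h; [reflexivity|].
  simpl. apply Kop_ext_all. intros; apply IHn.
Qed.

Lemma sumR_app l1 l2 : sumR (l1 ++ l2) = sumR l1 + sumR l2.
Proof. induction l1; simpl; [lra| rewrite IHl1; lra]. Qed.

Lemma sumR_filter {A} (P : A -> bool) (g : A -> R) l :
  sumR (map g (filter P l)) = sumR (map (fun x => if P x then g x else 0) l).
Proof.
  induction l; simpl; [reflexivity|]. destruct (P a); simpl; rewrite IHl; lra.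
Qed.

Lemma sumR_flat_map {A B} (F : A -> list B) (g : B -> R) l :
  sumR (map g (flat_map F l)) = sumR (map (fun x => sumR (map g (F x))) l).
Proof.
  induction l; simpl; [reflexivity|]. rewrite map_app, sumR_app, IHl. reflexivity.
Qed.

Lemma sumR_map_ext {A} (f g : A -> R) l : (forall x, f x = g x) -> sumR (map f l) = sumR (map g l).
Proof. intros H. induction l; simpl; [reflexivity|]. rewrite H, IHl. reflexivity. Qed.

Lemma sumR_scal {A} (a : R) (f : A -> R) l : sumR (map (fun x => a * f x) l) = a * sumR (map f l).
Proof. induction l; simpl; [lra|]. rewrite IHl. ring. Qed.

Lemma sumR_zero {A} (l : list A) : sumR (map (fun _ => 0) l) = 0.
Proof. induction l; simpl; [lra|]. rewrite IHl. ring. Qed.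

Lemma sumR_seq (g : nat -> R) N : sumR (map g (seq 0 (S N))) = sum_f_R0 g N.
Proof.
  induction N; [simpl; lra|].
  rewrite seq_S, map_app, sumR_app, IHN. simpl. lra.
Qed.

Lemma words_sum n : forall h (f : Z -> R),
  sumR (map (fun w => if stays_nonneg h w then weight p w * f (h + endpoint w)%Z else 0)
    (words c d p n)) = V n f h.
Proof.
  induction n; intros h f.
  - simpl. rewrite Z.add_0_r. ring.
  - simpl words. rewrite sumR_flat_map. simpl V.
    rewrite (sumR_map_ext _ (fun i => if (0 <=? h + i)%Z then p i * V n f (h + i) else 0)).
    2:{ intros i. rewrite map_map. simpl.
        destruct (0 <=? h + i)%Z; simpl.
        - rewrite <- IHn, <- sumR_scal. apply sumR_map_ext. intros w.
          destruct (stays_nonneg (h + i) w); [|ring].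
          rewrite Z.add_assoc. ring.
        - apply sumR_zero. }
    unfold jumps. rewrite sumR_filter, map_map, sumR_seq. unfold Kop, zsum.
    apply sum_eq. intros k _.
    destruct (Req_dec_T (p (- Z.of_nat c + Z.of_nat k)%Z) 0) as [E|E].
    + rewrite E. destruct (0 <=? _)%Z; ring.
    + reflexivity.
Qed.

Lemma Mcoef_V n : Mcoef c d p n = V n (fun _ => 1) 0%Z.
Proof.
  rewrite <- words_sum. unfold Mcoef. rewrite sumR_filter. apply sumR_map_ext.
  intros w. destruct (stays_nonneg 0 w); ring.
Qed.

Lemma mnk_V n k : mnk c d p n k = V n (fun e => if Z.eqb e k then 1 else 0) 0%Z.
Proof.
  rewrite <- words_sum. unfold mnk. rewrite sumR_filter. apply sumR_map_ext.
  intros w. destruct (stays_nonneg 0 w); simpl; [|reflexivity].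
  destruct (endpoint w =? k)%Z; ring.
Qed.

Definition chi (e : Z) : R :=
  1 - (if Z.eqb e 0 then 1 else 0)
    - sum_f_R0 (fun j => if Req_dec_T (p (- Z.of_nat (S j))%Z) 0 then 0
                         else (if Z.eqb e (Z.of_nat (S j)) then 1 else 0)) (c - 1).

Lemma Qcoef_V q n : Qcoef c d p q (S n) = q * V n chi 0%Z.
Proof.
  change (Qcoef c d p q (S n)) with (q * (Mcoef c d p n - mnk c d p n 0 - sum_f_R0 (fun j => if Req_dec_T (p (- Z.of_nat (S j))%Z) 0 then 0 else mnk c d p n (Z.of_nat (S j))) (c - 1))).
  unfold chi. rewrite !V_minus, V_sum, Mcoef_V, mnk_V.
  assert (E1 : V n (fun k => if (k =? 0)%Z then 1 else 0) 0%Z = V n (fun e => if (e =? 0)%Z then 1 else 0) 0%Z) by reflexivity.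
  assert (E2 : sum_f_R0 (fun j => if Req_dec_T (p (- Z.of_nat (S j))%Z) 0 then 0 else mnk c d p n (Z.of_nat (S j))) (c - 1)
    = sum_f_R0 (fun j => V n (fun k => if Req_dec_T (p (- Z.of_nat (S j))%Z) 0 then 0
                         else (if Z.eqb k (Z.of_nat (S j)) then 1 else 0)) 0%Z) (c - 1)).
  { apply sum_eq. intros j _. destruct (Req_dec_T _ 0).
    + rewrite V_const0. reflexivity.
    + rewrite mnk_V. reflexivity. }
  rewrite E2. reflexivity.
Qed.

Definition ind_s N e := sum_f_R0 (fun j => if Req_dec_T (p (- Z.of_nat (S j))%Z) 0 then 0
                         else (if Z.eqb e (Z.of_nat (S j)) then 1 else 0)) N.

Lemma indsum_prop N e :
  0 <= ind_s N e /\ ind_s N e <= 1 /\ ((e <= 0)%Z \/ (Z.of_nat (S N) < e)%Z -> ind_s N e = 0).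
Proof.
  induction N; unfold ind_s in *.
  - simpl. destruct (Req_dec_T _ 0); [split;[lra|split;[lra|auto]]|]. destruct (e =? 1)%Z eqn:E.
    + apply Z.eqb_eq in E. split; [lra|split;[lra|]]. intros; lia.
    + split; [lra|split;[lra|auto]].
  - rewrite tech5. cbv beta. destruct IHN as [H1 [H2 H3]].
    destruct (Z.eq_dec e (Z.of_nat (S (S N)))) as [E|E].
    + rewrite H3 by lia. destruct (Req_dec_T _ 0); [split;[lra|split;[lra|intros; lra]]|].
      match goal with |- context [Z.eqb ?a ?b] => destruct (Z.eqb a b) end; (split;[lra|split;[lra|]]); intros; exfalso; lia.
    + destruct (Req_dec_T _ 0).
      * split; [lra|split;[lra|]]. intros HH. rewrite H3 by lia. lra.
      * rewrite (proj2 (Z.eqb_neq _ _) E).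
        split; [lra|split;[lra|]]. intros HH. rewrite H3 by lia. lra.
Qed.

Lemma chi_bounds e : (0 <= e)%Z -> 0 <= chi e <= 1 /\ ((Z.of_nat c < e)%Z -> chi e = 1).
Proof.
  intros He. unfold chi. destruct (indsum_prop (c - 1) e) as [H1 [H2 H3]]. fold (ind_s (c-1) e).
  destruct (Z.eqb_spec e 0).
  - rewrite H3 by lia. split; [lra|]. intros; lia.
  - split; [lra|]. intros Hlt. rewrite H3 by lia. lra.
Qed.

Lemma Kop_mono_range f g h : (forall k, (0 <= k <= h + Z.of_nat d)%Z -> f k <= g k) -> Kop f h <= Kop g h.
Proof.
  intros H. unfold Kop. apply zsum_le. intros i Hi.
  destruct (0 <=? h + i)%Z eqn:E; [|lra].
  apply Rmult_le_compat_l; [apply Hp; lia|]. apply H. apply Z.leb_le in E. lia.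
Qed.

Lemma V_mono_range n f g h : (0 <= h)%Z ->
  (forall k, (0 <= k <= h + Z.of_nat n * Z.of_nat d)%Z -> f k <= g k) -> V n f h <= V n g h.
Proof.
  revert h. induction n; intros h Hh H; simpl.
  - apply H. lia.
  - apply Kop_mono_range. intros k Hk. apply IHn; [lia|]. intros k' Hk'. apply H. lia.
Qed.

Lemma Kop_full_le f h : (0 <= h)%Z -> (forall k, (- Z.of_nat c <= k < 0)%Z -> 0 <= f k) ->
  Kop f h <= zsum c d (fun i => p i * f (h + i)%Z).
Proof.
  intros Hh H. unfold Kop. apply zsum_le. intros i Hi.
  destruct (0 <=? h + i)%Z eqn:E; [lra|].
  apply Z.leb_gt in E. apply Rmult_le_pos; [apply Hp; lia| apply H; lia].
Qed.

Lemma Kop_full_ge f h : (0 <= h)%Z -> (forall k, (k < 0)%Z -> f k <= 0) ->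
  zsum c d (fun i => p i * f (h + i)%Z) <= Kop f h.
Proof.
  intros Hh H. unfold Kop. apply zsum_le. intros i Hi.
  destruct (0 <=? h + i)%Z eqn:E; [lra|].
  apply Z.leb_gt in E. assert (0 <= p i) by (apply Hp; lia).
  assert (f (h + i)%Z <= 0) by (apply H; lia). nra.
Qed.

Lemma Lyap_lower g lam : 0 <= lam -> (forall k, (0 <= k)%Z -> 0 <= g k) ->
  (forall h, (0 <= h)%Z -> lam * g h <= Kop g h) ->
  forall n h, (0 <= h)%Z -> lam ^ n * g h <= V n g h.
Proof.
  intros Hl Hg HK n. induction n; intros h Hh.
  - simpl. lra.
  - rewrite V_S. apply Rle_trans with (V n (fun k => lam * g k) h).
    + rewrite V_scal. simpl. rewrite Rmult_assoc. apply Rmult_le_compat_l; auto.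
    + apply V_mono; auto.
Qed.


Lemma Lyap_upper F lam gam : 0 < lam -> (forall k, (0 <= k)%Z -> 0 <= F k) ->
  (forall h, (0 <= h)%Z -> Kop F h <= lam * F h - gam) ->
  forall N h, (0 <= h)%Z ->
  gam * sum_f_R0 (fun m => / lam ^ (S m) * V m (fun _ => 1) h) N
    + / lam ^ (S N) * V (S N) F h <= F h.
Proof.
  intros Hl HF HK N. induction N; intros h Hh.
  - change (gam * (/ lam ^ 1 * 1) + / lam ^ 1 * Kop F h <= F h). rewrite pow_1.
    specialize (HK h Hh).
    assert (/ lam * Kop F h <= / lam * (lam * F h - gam)).
    { apply Rmult_le_compat_l; [left; apply Rinv_0_lt_compat; auto| auto]. }
    replace (/ lam * (lam * F h - gam)) with (F h - gam * (/ lam * 1)) in H by (field; lra).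
    lra.
  - specialize (IHN h Hh). rewrite tech5. cbv beta.
    assert (E : V (S (S N)) F h <= lam * V (S N) F h - gam * V (S N) (fun _ => 1) h).
    { rewrite V_S. apply Rle_trans with (V (S N) (fun k => 1 * (lam * F k) + (- gam) * 1) h).
      - apply V_mono; auto. intros k Hk. specialize (HK k Hk). lra.
      - rewrite V_lin, V_scal. lra. }
    assert (Hpow : 0 < lam ^ S (S N)) by (apply pow_lt; auto).
    assert (Hpow' : 0 < lam ^ S N) by (apply pow_lt; auto).
    assert (/ lam ^ S (S N) * V (S (S N)) F h <= / lam ^ S (S N) * (lam * V (S N) F h - gam * V (S N) (fun _ => 1) h)).
    { apply Rmult_le_compat_l; auto. left; apply Rinv_0_lt_compat; auto. }
    replace (/ lam ^ S (S N) * (lam * V (S N) F h - gam * V (S N) (fun _ => 1) h))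
      with (/ lam ^ S N * V (S N) F h - gam * (/ lam ^ S (S N) * V (S N) (fun _ => 1) h)) in H
      by (rewrite (pow_S lam (S N)) at 1 2; field; try split; lra).
    lra.
Qed.

Lemma P_as_zsum u : Pjump c d p u = zsum c d (fun i => p i * powerRZ u i).
Proof. reflexivity. Qed.

Lemma P1_nonneg : 0 <= Pjump c d p 1.
Proof.
  unfold Pjump. rewrite <- zsum_zero. apply zsum_le.
  intros i Hi. rewrite powerRZ_R1. rewrite Rmult_1_r. apply Hp; auto.
Qed.

Lemma Kop_one h : Kop (fun _ => 1) h <= Pjump c d p 1.
Proof.
  unfold Kop, Pjump. apply zsum_le. intros i Hi. rewrite powerRZ_R1.
  destruct (0 <=? h + i)%Z; [lra|]. rewrite Rmult_1_r; apply Hp; auto.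
Qed.

Lemma W_upper n h : (0 <= h)%Z -> V n (fun _ => 1) h <= Pjump c d p 1 ^ n.
Proof.
  pose proof P1_nonneg as HP1.
  revert h. induction n; intros h Hh; [simpl; lra|].
  rewrite V_S. apply Rle_trans with (V n (fun _ => Pjump c d p 1 * 1) h).
  - apply V_mono; auto. intros; rewrite Rmult_1_r; apply Kop_one.
  - rewrite V_scal. simpl. apply Rmult_le_compat_l; auto.
Qed.



Lemma V_push m f e : (forall k, (0 <= k)%Z -> 0 <= f k) -> (0 <= e)%Z ->
  p (Z.of_nat d) ^ m * f (e + Z.of_nat m * Z.of_nat d)%Z <= V m f e.
Proof.
  intros Hf. revert e. induction m; intros e He.
  - simpl. rewrite Z.add_0_r. lra.
  - simpl V. unfold Kop.
    assert (Hpd0 : 0 <= p (Z.of_nat d)) by (apply Hp; lia).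
    eapply Rle_trans; [|apply zsum_ge_d].
    + replace (0 <=? e + Z.of_nat d)%Z with true by (symmetry; apply Z.leb_le; lia).
      rewrite pow_S, Rmult_assoc. apply Rmult_le_compat_l; auto.
      replace (e + Z.of_nat (S m) * Z.of_nat d)%Z with (e + Z.of_nat d + Z.of_nat m * Z.of_nat d)%Z by lia.
      apply IHm. lia.
    + intros i Hi. destruct (0 <=? e + i)%Z eqn:E; [|lra].
      apply Rmult_le_pos; [apply Hp; auto|]. apply V_nonneg; auto. apply Z.leb_le in E; lia.
Qed.

Lemma Qcoef_0 q : Qcoef c d p q 0 = 0.
Proof. reflexivity. Qed.

Lemma Qcoef_bounds q n : 0 <= q -> 0 <= Qcoef c d p q (S n) <= q * V n (fun _ => 1) 0%Z.
Proof.
  intros Hq. rewrite Qcoef_V. split.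
  - apply Rmult_le_pos; auto. apply V_nonneg; [|lia]. intros k Hk; apply chi_bounds; auto.
  - apply Rmult_le_compat_l; auto. apply V_mono; [|lia]. intros k Hk; apply chi_bounds; auto.
Qed.

Lemma Qcoef_nonneg q n : 0 <= q -> 0 <= Qcoef c d p q n.
Proof. intros Hq. destruct n; [simpl; lra| apply Qcoef_bounds; auto]. Qed.

Lemma Qcoef_upper q n : 0 <= q -> Qcoef c d p q (S n) <= q * Pjump c d p 1 ^ n.
Proof.
  intros Hq. eapply Rle_trans; [apply Qcoef_bounds; auto|].
  apply Rmult_le_compat_l; auto. apply W_upper. lia.
Qed.

Lemma Qcoef_lower q n : 0 <= q ->
  q * p (Z.of_nat d) ^ (S c) * V n (fun _ => 1) 0%Z <= Qcoef c d p q (S (n + S c)).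
Proof.
  intros Hq. rewrite Qcoef_V, V_add, Rmult_assoc. apply Rmult_le_compat_l; auto.
  rewrite <- V_scal. apply V_mono; [|lia]. intros k Hk.
  eapply Rle_trans; [|apply V_push; auto].
  - assert (H0: (0 <= k + Z.of_nat (S c) * Z.of_nat d)%Z) by lia.
    rewrite (proj2 (chi_bounds _ H0)); [lra|]. nia.
  - intros; apply chi_bounds; auto.
Qed.

Lemma bern_nat n x : 0 < x -> 1 + INR n * (x - 1) <= x ^ n.
Proof.
  intros Hx. induction n.
  - simpl. lra.
  - rewrite S_INR, pow_S.
    assert (x * (1 + INR n * (x - 1)) <= x * x ^ n) by (apply Rmult_le_compat_l; lra).
    assert (0 <= INR n) by apply pos_INR.
    assert (0 <= INR n * ((x - 1) * (x - 1))) by (apply Rmult_le_pos; [lra| apply Rle_0_sqr]).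
    idtac.
    nra.
Qed.

Lemma key_ineq i x : 0 < x -> 1 + IZR i * (x - 1) <= powerRZ x i /\
  ((i < 0)%Z -> x <> 1 -> 1 + IZR i * (x - 1) < powerRZ x i).
Proof.
  intros Hx. destruct i as [|n|n]; cbn [powerRZ].
  - split; [lra|intros; lia].
  - split; [|intros; lia].
    replace (IZR (Z.pos n)) with (INR (Pos.to_nat n)) by (rewrite INR_IZR_INZ, positive_nat_Z; reflexivity).
    apply bern_nat; auto.
  - rewrite <- pow_inv. pose proof (bern_nat (Pos.to_nat n) (/ x) ltac:(apply Rinv_0_lt_compat; auto)) as B.
    replace (IZR (Z.neg n)) with (- INR (Pos.to_nat n)).
    2:{ rewrite INR_IZR_INZ, positive_nat_Z, <- opp_IZR. reflexivity. }
    assert (HN : 1 <= INR (Pos.to_nat n)).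
    { replace 1 with (INR 1) by reflexivity. apply le_INR. lia. }
    assert (E : / x - 1 - (1 - x) = (x - 1) * (x - 1) / x) by (field; lra).
    assert (0 <= (x - 1) * (x - 1) / x) by (apply Rmult_le_pos; [apply Rle_0_sqr| left; apply Rinv_0_lt_compat; auto]).
    split.
    + nra.
    + intros _ Hx1. assert (0 < (x - 1) * (x - 1) / x).
      { apply Rmult_lt_0_compat; [|apply Rinv_0_lt_compat; auto].
        assert (x - 1 <> 0) by lra. nra. }
      nra.
Qed.

Lemma tangent_ineq i u t : 0 < u -> 0 < t ->
  powerRZ t i + IZR i * powerRZ t (i - 1) * (u - t) <= powerRZ u i /\
  ((i < 0)%Z -> u <> t -> powerRZ t i + IZR i * powerRZ t (i - 1) * (u - t) < powerRZ u i).
Proof.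
  intros Hu Ht. set (x := u / t).
  assert (Hx : 0 < x) by (unfold x; apply Rdiv_lt_0_compat; auto).
  assert (Eu : u = t * x) by (unfold x; field; lra).
  assert (E1 : powerRZ u i = powerRZ t i * powerRZ x i) by (rewrite Eu, powerRZ_mult; reflexivity).
  assert (E2 : powerRZ t i = powerRZ t (i - 1) * t).
  { replace i with (i - 1 + 1)%Z at 1 by lia. rewrite powerRZ_add by lra. simpl. ring. }
  assert (Hti : 0 < powerRZ t (i - 1)) by (apply powerRZ_lt; auto).
  destruct (key_ineq i x Hx) as [K1 K2].
  assert (E3 : powerRZ u i - (powerRZ t i + IZR i * powerRZ t (i - 1) * (u - t))
     = powerRZ t (i - 1) * t * (powerRZ x i - (1 + IZR i * (x - 1)))).
  { rewrite E1, E2, Eu. ring. }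
  split.
  - assert (0 <= powerRZ t (i - 1) * t * (powerRZ x i - (1 + IZR i * (x - 1)))).
    { apply Rmult_le_pos; [apply Rmult_le_pos; lra| lra]. }
    lra.
  - intros Hi Hut. assert (x <> 1).
    { intros Hx1. apply Hut. rewrite Eu, Hx1. ring. }
    specialize (K2 Hi H).
    assert (0 < powerRZ t (i - 1) * t * (powerRZ x i - (1 + IZR i * (x - 1)))).
    { apply Rmult_lt_0_compat; [apply Rmult_lt_0_compat; lra| lra]. }
    lra.
Qed.

Lemma zsum_ge_at f j : (- Z.of_nat c <= j <= Z.of_nat d)%Z ->
  (forall i, (- Z.of_nat c <= i <= Z.of_nat d)%Z -> 0 <= f i) ->
  f j <= zsum c d f.
Proof.
  intros Hj H. unfold zsum.
  assert (E : (- Z.of_nat c + Z.of_nat (Z.to_nat (j + Z.of_nat c)))%Z = j) by lia.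
  rewrite <- E at 1.
  apply sum_ge_term with (f := fun k => f (- Z.of_nat c + Z.of_nat k)%Z).
  - intros k Hk. apply H. lia.
  - lia.
Qed.

Hypothesis Hpc : p (- Z.of_nat c)%Z <> 0.

Lemma P_convex u t : 0 < u -> 0 < t -> u <> t ->
  Pjump c d p t + Pjump' c d p t * (u - t) < Pjump c d p u.
Proof.
  intros Hu Ht Hut. unfold Pjump, Pjump'.
  assert (E : zsum c d (fun i => p i * powerRZ t i) + zsum c d (fun i => IZR i * p i * powerRZ t (i - 1)) * (u - t)
     = zsum c d (fun i => p i * (powerRZ t i + IZR i * powerRZ t (i - 1) * (u - t)))).
  { rewrite Rmult_comm, <- zsum_scal, <- zsum_plus. apply zsum_ext. intros; ring. }
  rewrite E.
  assert (D : 0 < zsum c d (fun i => p i * (powerRZ u i - (powerRZ t i + IZR i * powerRZ t (i - 1) * (u - t))))).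
  { eapply Rlt_le_trans; [|apply zsum_ge_at with (j := (- Z.of_nat c)%Z)].
    - apply Rmult_lt_0_compat.
      + assert (0 <= p (- Z.of_nat c)%Z) by (apply Hp; lia). lra.
      + destruct (tangent_ineq (- Z.of_nat c) u t Hu Ht) as [_ T2]. specialize (T2 ltac:(lia) Hut). lra.
    - lia.
    - intros i Hi. apply Rmult_le_pos; [apply Hp; auto|].
      destruct (tangent_ineq i u t Hu Ht) as [T1 _]. lra. }
  assert (E2 : zsum c d (fun i => p i * (powerRZ u i - (powerRZ t i + IZR i * powerRZ t (i - 1) * (u - t))))
     = zsum c d (fun i => p i * powerRZ u i) - zsum c d (fun i => p i * (powerRZ t i + IZR i * powerRZ t (i - 1) * (u - t)))).
  { replace (zsum c d (fun i => p i * powerRZ u i) - zsum c d (fun i => p i * (powerRZ t i + IZR i * powerRZ t (i - 1) * (u - t))))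
      with (zsum c d (fun i => p i * powerRZ u i) + (-1) * zsum c d (fun i => p i * (powerRZ t i + IZR i * powerRZ t (i - 1) * (u - t)))) by ring.
    rewrite <- zsum_scal, <- zsum_plus. apply zsum_ext. intros; ring. }
  lra.
Qed.

Lemma P_pos u : 0 < u -> 0 < Pjump c d p u.
Proof.
  intros Hu. unfold Pjump. eapply Rlt_le_trans; [|apply zsum_ge_at with (j := (- Z.of_nat c)%Z)].
  - apply Rmult_lt_0_compat; [|apply powerRZ_lt; auto].
    assert (0 <= p (- Z.of_nat c)%Z) by (apply Hp; lia). lra.
  - lia.
  - intros i Hi. apply Rmult_le_pos; [apply Hp; auto| apply powerRZ_le; auto].
Qed.

Lemma sum_ipt t : 0 < t -> zsum c d (fun i => IZR i * p i * powerRZ t i) = t * Pjump' c d p t.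
Proof.
  intros Ht. unfold Pjump'. rewrite <- zsum_scal. apply zsum_ext. intros i _.
  replace i with (i - 1 + 1)%Z at 3 by lia. rewrite powerRZ_add by lra. simpl. ring.
Qed.

Lemma W_lower_drift : 0 <= Pjump' c d p 1 -> forall n,
  Pjump c d p 1 ^ n <= (INR n * INR d + 1) * V n (fun _ => 1) 0%Z.
Proof.
  intros Hdel n.
  set (f := fun k : Z => IZR k + 1).
  assert (Hf0 : forall k, (0 <= k)%Z -> 0 <= f k).
  { intros k Hk. unfold f. apply IZR_le in Hk. lra. }
  assert (HK : forall h, (0 <= h)%Z -> Pjump c d p 1 * f h <= Kop f h).
  { intros h Hh. eapply Rle_trans; [|apply Kop_full_ge; auto].
    - assert (E : zsum c d (fun i => p i * f (h + i)%Z) =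
                  f h * Pjump c d p 1 + Pjump' c d p 1).
      { unfold Pjump, Pjump'. rewrite <- zsum_scal, <- zsum_plus. apply zsum_ext.
        intros i _. unfold f. rewrite !powerRZ_R1, plus_IZR. ring. }
      rewrite E. lra.
    - intros k Hk. unfold f. assert (Hk1 : (k <= -1)%Z) by lia. apply IZR_le in Hk1. lra. }
  pose proof (Lyap_lower f (Pjump c d p 1) P1_nonneg Hf0 HK n 0%Z ltac:(lia)) as L.
  unfold f at 1 in L. simpl in L. rewrite Rplus_0_l, Rmult_1_r in L.
  eapply Rle_trans; [apply L|].
  rewrite <- V_scal. apply V_mono_range; [lia|].
  intros k Hk. unfold f. rewrite Rmult_1_r.
  assert (IZR k <= INR n * INR d).
  { rewrite !INR_IZR_INZ, <- mult_IZR. apply IZR_le. lia. }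
  lra.
Qed.

Lemma powerRZ_ge1 t k : 1 <= t -> (0 <= k)%Z -> 1 <= powerRZ t k.
Proof.
  intros Ht Hk. replace k with (Z.of_nat (Z.to_nat k)) by lia.
  rewrite <- pow_powerRZ. apply pow_R1_Rle. auto.
Qed.

Lemma M_summable tau : 1 < tau -> Pjump' c d p tau = 0 -> Pjump c d p tau < Pjump c d p 1 ->
  forall N, (Pjump c d p 1 - Pjump c d p tau) *
    sum_f_R0 (fun m => / Pjump c d p tau ^ (S m) * V m (fun _ => 1) 0%Z) N
    <= powerRZ tau (Z.of_nat c) * (INR c + 1) - 1.
Proof.
  intros Ht HP' HPl N.
  pose proof (P_pos tau ltac:(lra)) as HPt.
  set (F := fun k : Z => powerRZ tau (Z.of_nat c) * ((IZR k + INR c + 1) * powerRZ tau k) - 1).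
  assert (HF : forall k, (- Z.of_nat c <= k)%Z -> 0 <= F k).
  { intros k Hk. unfold F.
    assert (E : powerRZ tau (Z.of_nat c) * ((IZR k + INR c + 1) * powerRZ tau k)
       = (IZR k + INR c + 1) * powerRZ tau (Z.of_nat c + k)).
    { rewrite powerRZ_add by lra. ring. }
    rewrite E.
    assert (1 <= powerRZ tau (Z.of_nat c + k)) by (apply powerRZ_ge1; lia || lra).
    assert (1 <= IZR k + INR c + 1).
    { rewrite INR_IZR_INZ, <- plus_IZR. assert (0 <= k + Z.of_nat c)%Z by lia.
      apply IZR_le in H0. rewrite plus_IZR in *. simpl in *. lra. }
    nra. }
  assert (HK : forall h, (0 <= h)%Z -> Kop F h <= Pjump c d p tau * F h - (Pjump c d p 1 - Pjump c d p tau)).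
  { intros h Hh. eapply Rle_trans; [apply Kop_full_le; auto; intros k Hk; apply HF; lia|].
    assert (E : zsum c d (fun i => p i * F (h + i)%Z) =
       (powerRZ tau (Z.of_nat c) * (IZR h + INR c + 1) * powerRZ tau h) * Pjump c d p tau
       + (powerRZ tau (Z.of_nat c) * powerRZ tau h) * zsum c d (fun i => IZR i * p i * powerRZ tau i)
       + (-1) * Pjump c d p 1).
    { unfold Pjump. rewrite <- !zsum_scal, <- !zsum_plus. apply zsum_ext.
      intros i _. unfold F. rewrite powerRZ_R1, plus_IZR, powerRZ_add by lra. ring. }
    rewrite E, sum_ipt, HP' by lra. unfold F. lra. }
  pose proof (Lyap_upper F (Pjump c d p tau) (Pjump c d p 1 - Pjump c d p tau) HPt
     (fun k Hk => HF k ltac:(lia)) HK N 0%Z ltac:(lia)) as L.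
  assert (0 <= / Pjump c d p tau ^ S N * V (S N) F 0%Z).
  { apply Rmult_le_pos; [left; apply Rinv_0_lt_compat; apply pow_lt; auto|].
    apply V_nonneg; [|lia]. intros; apply HF; lia. }
  assert (EF : F 0%Z = powerRZ tau (Z.of_nat c) * (INR c + 1) - 1) by (unfold F; simpl; ring). lra.
Qed.

Lemma W_lower_exp tau lam : 0 < tau -> Pjump' c d p tau = 0 -> 0 <= lam -> lam < Pjump c d p tau ->
  exists C, 0 < C /\ forall n, C * lam ^ n <= V n (fun _ => 1) 0%Z.
Proof.
  intros Ht HP' Hl Hlt.
  set (S2 := zsum c d (fun i => IZR i * IZR i * p i * powerRZ tau i)).
  assert (HS2 : 0 <= S2).
  { unfold S2. rewrite <- zsum_zero. apply zsum_le. intros i Hi.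
    assert (0 <= p i) by (apply Hp; auto). assert (0 <= powerRZ tau i) by (apply powerRZ_le; auto).
    assert (0 <= IZR i * IZR i) by apply Rle_0_sqr. 
    apply Rmult_le_pos; [apply Rmult_le_pos|]; auto. }
  destruct (INR_unbounded (S2 / (Pjump c d p tau - lam))) as [L HL].
  assert (HL' : S2 <= (Pjump c d p tau - lam) * (INR L + 1)).
  { assert (E : S2 = (Pjump c d p tau - lam) * (S2 / (Pjump c d p tau - lam))) by (field; lra).
    rewrite E at 1. apply Rmult_le_compat_l; lra. }
  set (phi := fun k : Z => (IZR k + 1) * (INR L + 1 - IZR k)).
  set (g := fun k : Z => powerRZ tau k * Rmax 0 (phi k)).
  assert (Hg0 : forall k, 0 <= g k).
  { intros k. unfold g. apply Rmult_le_pos; [apply powerRZ_le; auto| apply Rmax_l]. }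
  assert (Hgneg : forall k, (k < 0)%Z -> g k <= 0).
  { intros k Hk. unfold g. assert (phi k <= 0).
    { unfold phi. assert (Hk1 : (k <= -1)%Z) by lia. apply IZR_le in Hk1.
      assert (0 <= INR L) by apply pos_INR. nra. }
    rewrite Rmax_left by lra. lra. }
  assert (HK : forall h, (0 <= h)%Z -> lam * g h <= Kop g h).
  { intros h Hh. destruct (Z_le_gt_dec h (Z.of_nat L)) as [HhL|HhL].
    2:{ assert (Hphi : phi h <= 0).
      { unfold phi. apply IZR_le in Hh. rewrite INR_IZR_INZ. assert (Hh2 : (Z.of_nat L + 1 <= h)%Z) by lia.
        apply IZR_le in Hh2. rewrite plus_IZR in Hh2. simpl in Hh. nra. }
      unfold g at 1. rewrite Rmax_left by lra. rewrite Rmult_0_r, Rmult_0_r.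
      unfold Kop. apply zsum_nonneg. intros i Hi.
      destruct (0 <=? h + i)%Z; [|lra]. apply Rmult_le_pos; [apply Hp; auto| apply Hg0]. }
    eapply Rle_trans; [|apply Kop_full_ge; auto].
    assert (E : zsum c d (fun i => p i * (powerRZ tau (h + i) * phi (h + i)%Z)) =
       powerRZ tau h * (phi h * Pjump c d p tau
          + (INR L - 2 * IZR h) * zsum c d (fun i => IZR i * p i * powerRZ tau i) - S2)).
    { unfold Pjump, S2. replace (phi h * zsum c d (fun i => p i * powerRZ tau i) +
           (INR L - 2 * IZR h) * zsum c d (fun i => IZR i * p i * powerRZ tau i) -
           zsum c d (fun i => IZR i * IZR i * p i * powerRZ tau i))
       with (phi h * zsum c d (fun i => p i * powerRZ tau i) +
           (INR L - 2 * IZR h) * zsum c d (fun i => IZR i * p i * powerRZ tau i) +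
           (-1) * zsum c d (fun i => IZR i * IZR i * p i * powerRZ tau i)) by ring.
      rewrite <- !zsum_scal, <- !zsum_plus, <- zsum_scal. apply zsum_ext.
      intros i _. unfold phi. rewrite powerRZ_add by lra. rewrite plus_IZR. ring. }
    assert (Hge : zsum c d (fun i => p i * (powerRZ tau (h + i) * phi (h + i)%Z))
                  <= zsum c d (fun i => p i * g (h + i)%Z)).
    { apply zsum_le. intros i Hi. apply Rmult_le_compat_l; [apply Hp; auto|].
      unfold g. apply Rmult_le_compat_l; [apply powerRZ_le; auto| apply Rmax_r]. }
    eapply Rle_trans; [|apply Hge]. rewrite E, sum_ipt, HP', Rmult_0_r, Rmult_0_r, Rplus_0_r by lra.
    assert (Hphi : INR L + 1 <= phi h).
    { unfold phi. apply IZR_le in Hh. rewrite INR_IZR_INZ. apply IZR_le in HhL. simpl in Hh. nra. }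
    unfold g. rewrite Rmax_right by (assert (0 <= INR L) by apply pos_INR; lra).
    assert (0 < powerRZ tau h) by (apply powerRZ_lt; auto).
    rewrite <- Rmult_assoc, (Rmult_comm lam), Rmult_assoc.
    apply Rmult_le_compat_l; [lra|]. nra. }
  set (G := (1 + tau) ^ L * ((INR L + 1) * (INR L + 1))).
  assert (HG : forall k, (0 <= k)%Z -> g k <= G).
  { intros k Hk. assert (0 <= INR L) by apply pos_INR.
    assert (0 < (1 + tau) ^ L) by (apply pow_lt; lra).
    destruct (Z_le_gt_dec k (Z.of_nat L)) as [HkL|HkL].
    - unfold g, G. apply Rmult_le_compat; [apply powerRZ_le; auto| apply Rmax_l| |].
      + replace k with (Z.of_nat (Z.to_nat k)) by lia. rewrite <- pow_powerRZ.
        apply Rle_trans with ((1 + tau) ^ Z.to_nat k).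
        * apply pow_incr; lra.
        * apply Rle_pow; [lra| lia].
      + apply Rmax_lub; [apply Rmult_le_pos; lra|]. unfold phi.
        apply IZR_le in Hk. rewrite INR_IZR_INZ. apply IZR_le in HkL. simpl in Hk.
        rewrite <- INR_IZR_INZ in *. apply Rmult_le_compat; lra.
    - assert (Hphi : phi k <= 0).
      { unfold phi. apply IZR_le in Hk. rewrite INR_IZR_INZ. assert (Hh2 : (Z.of_nat L + 1 <= k)%Z) by lia.
        apply IZR_le in Hh2. rewrite plus_IZR in Hh2. simpl in Hk. nra. }
      unfold g. rewrite Rmax_left by lra. rewrite Rmult_0_r. unfold G.
      apply Rmult_le_pos; [lra| apply Rmult_le_pos; lra]. }
  assert (HGpos : 0 < G).
  { unfold G. assert (0 <= INR L) by apply pos_INR. apply Rmult_lt_0_compat; [apply pow_lt; lra| nra]. }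
  exists ((INR L + 1) / G). split.
  { apply Rdiv_lt_0_compat; auto. assert (0 <= INR L) by apply pos_INR. lra. }
  intros n.
  pose proof (Lyap_lower g lam Hl (fun k _ => Hg0 k) HK n 0%Z ltac:(lia)) as LL.
  assert (Eg0 : g 0%Z = INR L + 1).
  { unfold g, phi. simpl. rewrite Rmax_right; [ring|]. assert (0 <= INR L) by apply pos_INR. lra. }
  rewrite Eg0 in LL.
  assert (V n g 0%Z <= G * V n (fun _ => 1) 0%Z).
  { rewrite <- V_scal. apply V_mono; [|lia]. intros k Hk. rewrite Rmult_1_r. apply HG; auto. }
  assert (E : (INR L + 1) / G * lam ^ n = / G * (lam ^ n * (INR L + 1))) by (field; lra).
  rewrite E. apply Rmult_le_reg_l with G; auto.
  rewrite <- Rmult_assoc, Rinv_r, Rmult_1_l by lra. lra.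
Qed.


End Comb.


Lemma series_partial_le (u : nat -> R) l : (forall n, 0 <= u n) -> is_series u l ->
  forall N, sum_f_R0 u N <= l.
Proof.
  intros Hu Hs N. apply is_series_Reals in Hs.
  apply (growing_ineq (sum_f_R0 u)); [|exact Hs].
  intros n. simpl. specialize (Hu (S n)). lra.
Qed.

Lemma term_le_series (u : nat -> R) l n : (forall n, 0 <= u n) -> is_series u l -> u n <= l.
Proof.
  intros Hu Hs. eapply Rle_trans; [|apply (series_partial_le u l Hu Hs n)].
  apply sum_ge_term; auto.
Qed.

Lemma series_nonneg (u : nat -> R) l : (forall n, 0 <= u n) -> is_series u l -> 0 <= l.
Proof. intros Hu Hs. eapply Rle_trans; [apply (Hu 0%nat)|]. apply term_le_series; auto. Qed.

Lemma radius_ge (b : nat -> R) r : (exists M, forall n, Rabs (b n * r ^ n) <= M) ->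
  Rbar_le r (CV_radius b).
Proof. intros H. destruct (CV_radius_bounded b) as [H1 _]. apply H1. exact H. Qed.

Lemma radius_le (b : nat -> R) B :
  (forall r, (exists M, forall n, Rabs (b n * r ^ n) <= M) -> r <= B) ->
  Rbar_le (CV_radius b) B.
Proof. intros H. destruct (CV_radius_bounded b) as [_ H2]. apply H2. intros r Hr. apply H. exact Hr. Qed.

Lemma pow_lt_strict x y k : 0 <= x < y -> (1 <= k)%nat -> x ^ k < y ^ k.
Proof.
  intros Hxy Hk. destruct k; [lia|]. clear Hk. induction k.
  - simpl. lra.
  - change (x * x ^ S k < y * y ^ S k).
    assert (0 <= x ^ S k) by (apply pow_le; lra).
    assert (0 < y ^ S k) by (apply pow_lt; lra). nra.
Qed.

Lemma pow_decr_le t n N : 0 <= t <= 1 -> (n <= N)%nat -> t ^ N <= t ^ n.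
Proof.
  intros Ht HnN. replace N with (n + (N - n))%nat by lia. rewrite pow_add.
  assert (0 <= t ^ n) by (apply pow_le; lra).
  assert (t ^ (N - n) <= 1) by (rewrite <- (pow1 (N - n)); apply pow_incr; lra).
  assert (0 <= t ^ (N - n)) by (apply pow_le; lra). nra.
Qed.

Section Ana.
Variable a : nat -> R.
Hypothesis Ha : forall n, 0 <= a n.
Hypothesis Ha0 : a 0%nat = 0.
Variable k0 : nat.
Hypothesis Hk0 : 0 < a k0.

Lemma terms_nonneg x : 0 <= x -> forall n, 0 <= a n * x ^ n.
Proof. intros Hx n. apply Rmult_le_pos; auto. apply pow_le; auto. Qed.

Lemma strict_mono x y lx ly : 0 <= x < y ->
  is_series (fun n => a n * x ^ n) lx -> is_series (fun n => a n * y ^ n) ly -> lx < ly.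
Proof.
  intros Hxy Hx Hy.
  pose proof (is_series_minus _ _ _ _ Hy Hx) as Hm.
  assert (Hk : (1 <= k0)%nat) by (destruct k0; [rewrite Ha0 in Hk0; lra| lia]).
  assert (Hnn : forall n, 0 <= plus (a n * y ^ n) (opp (a n * x ^ n))).
  { intros n. change (0 <= a n * y ^ n - a n * x ^ n).
    assert (x ^ n <= y ^ n) by (apply pow_incr; lra).
    specialize (Ha n). nra. }
  pose proof (term_le_series _ _ k0 Hnn Hm) as T.
  change (a k0 * y ^ k0 - a k0 * x ^ k0 <= ly - lx) in T.
  assert (x ^ k0 < y ^ k0) by (apply pow_lt_strict; auto).
  nra.
Qed.

Lemma ivt_zero s N : 0 < s -> Rbar_le s (CV_radius a) ->
  1 < sum_f_R0 (fun n => a n * s ^ n) N ->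
  exists r, 0 < r < s /\ is_series (fun n => a n * r ^ n) 1.
Proof.
  intros Hs HR HN.
  set (Sv := sum_f_R0 (fun n => a n * s ^ n) N) in *.
  set (eps := (1 - / Sv) / (2 * (INR N + 1))).
  assert (HN0 : 0 <= INR N) by apply pos_INR.
  assert (HiS : 0 < / Sv < 1).
  { split; [apply Rinv_0_lt_compat; lra|]. rewrite <- Rinv_1. apply Rinv_lt_contravar; lra. }
  assert (He : 0 < eps) by (unfold eps; apply Rdiv_lt_0_compat; lra).
  assert (HNe : INR N * eps <= (1 - / Sv) / 2).
  { unfold eps. unfold Rdiv. rewrite Rinv_mult.
    assert (INR N * / (INR N + 1) <= 1).
    { apply Rmult_le_reg_r with (INR N + 1); [lra|]. rewrite Rmult_assoc, Rinv_l by lra. lra. }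
    assert (0 < / (INR N + 1)) by (apply Rinv_0_lt_compat; lra).
    assert (0 < 1 - / Sv) by lra.
    replace (INR N * ((1 - / Sv) * (/ 2 * / (INR N + 1)))) with ((INR N * / (INR N + 1)) * ((1 - / Sv) / 2)) by (unfold Rdiv; ring).
    nra. }
  assert (He1 : eps < 1 / 2).
  { unfold eps. apply Rmult_lt_reg_r with (2 * (INR N + 1)); [lra|].
    unfold Rdiv. rewrite Rmult_assoc, Rinv_l by lra. lra. }
  set (t := 1 - eps). set (s' := t * s).
  assert (Ht : 0 < t < 1) by (unfold t; lra).
  assert (Hs' : 0 < s' < s) by (unfold s'; split; [apply Rmult_lt_0_compat|]; nra).
  assert (HtN : 1 - INR N * eps <= t ^ N).
  { pose proof (bern_nat N t ltac:(lra)). unfold t in *. lra. }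
  assert (Hpart : t ^ N * Sv <= sum_f_R0 (fun n => a n * s' ^ n) N).
  { unfold Sv. rewrite scal_sum. apply sum_Rle. intros n Hn.
    unfold s'. rewrite Rpow_mult_distr.
    assert (t ^ N <= t ^ n) by (apply pow_decr_le; [lra| lia]).
    assert (0 <= a n * s ^ n) by (apply terms_nonneg; lra).
    nra. }
  assert (Hgt : 1 < sum_f_R0 (fun n => a n * s' ^ n) N).
  { assert (t ^ N * Sv >= (1 - (1 - / Sv) / 2) * Sv) by nra.
    assert ((1 - (1 - / Sv) / 2) * Sv = (Sv + 1) / 2) by (field; lra).
    lra. }
  assert (Hin : forall x, 0 <= x <= s' -> Rbar_lt (Rabs x) (CV_radius a)).
  { intros x Hx. rewrite Rabs_pos_eq by lra.
    destruct (CV_radius a) as [R| |]; simpl in *; auto; lra. }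
  assert (Hser : forall x, 0 <= x <= s' -> is_series (fun n => a n * x ^ n) (PSeries a x)).
  { intros x Hx. apply is_pseries_R. apply PSeries_correct. apply CV_radius_inside. apply Hin; auto. }
  assert (Hf1 : 1 < PSeries a s').
  { eapply Rlt_le_trans; [apply Hgt|]. apply series_partial_le; [apply terms_nonneg; lra|].
    apply Hser; lra. }
  destruct (Ranalysis5.IVT_interv (fun x => PSeries a x - 1) 0 s') as [r [Hr Hfr]].
  - intros x Hx. apply continuity_pt_minus.
    + apply PSeries_continuity. apply Hin; auto.
    + apply continuity_pt_const. intros u v; reflexivity.
  - lra.
  - rewrite PSeries_0, Ha0. lra.
  - lra.
  - exists r. assert (r <> 0).
    { intros E. rewrite E, PSeries_0, Ha0 in Hfr. lra. }
    split; [lra|]. replace 1 with (PSeries a r) by lra. apply Hser. lra.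
Qed.

End Ana.

Lemma sum_mono_N (f : nat -> R) N M : (forall j, 0 <= f j) -> (N <= M)%nat -> sum_f_R0 f N <= sum_f_R0 f M.
Proof.
  intros Hf HNM. induction HNM; [lra|]. simpl. specialize (Hf (S m)). lra.
Qed.

Lemma sum_exchange (f : nat -> nat -> R) N K :
  sum_f_R0 (fun n => sum_f_R0 (fun k => f k n) K) N = sum_f_R0 (fun k => sum_f_R0 (fun n => f k n) N) K.
Proof.
  induction N; simpl; [reflexivity|]. rewrite IHN, <- sum_plus. reflexivity.
Qed.

Lemma rbar_between x (R : Rbar) : 0 <= x -> Rbar_lt x R -> exists y, x < y /\ Rbar_lt y R.
Proof.
  intros Hx H. destruct R as [r| |]; simpl in *.
  - exists ((x + r) / 2). simpl. split; lra.
  - exists (x + 1). simpl. split; [lra|auto].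
  - contradiction.
Qed.

Section Dser.
Variables (c d : nat) (p : Z -> R) (q : R).
Notation a := (Qcoef c d p q).
Hypothesis Ha : forall n, 0 <= a n.
Hypothesis Ha0 : a 0%nat = 0.

Notation Qp := (Qpow c d p q).

Lemma Qpow_nonneg k n : 0 <= Qp k n.
Proof.
  revert n. induction k; intros n; simpl.
  - destruct (Nat.eqb n 0); lra.
  - apply cond_pos_sum. intros i. apply Rmult_le_pos; auto.
Qed.

Lemma Qpow_low k n : (n < k)%nat -> Qp k n = 0.
Proof.
  revert n. induction k; intros n Hn; [lia|]. simpl.
  rewrite <- (sum_eq_R0 (fun _ => 0) n) by auto. apply sum_eq. intros i Hi.
  destruct i.
  - rewrite Ha0. ring.
  - rewrite IHk by lia. ring.
Qed.

Lemma Qpow_1 n : Qp 1 n = a n.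
Proof.
  change (sum_f_R0 (fun i => a i * Qp 0 (n - i)) n = a n).
  destruct n.
  - simpl. ring.
  - rewrite tech5. rewrite Nat.sub_diag.
    replace (sum_f_R0 (fun i => a i * Qp 0 (S n - i)) n) with (sum_f_R0 (fun _ => 0) n).
    + rewrite sum_cte. simpl. ring.
    + apply sum_eq. intros i Hi. change (Qp 0 (S n - i)) with (if Nat.eqb (S n - i) 0 then 1 else 0).
      replace (Nat.eqb (S n - i) 0) with false by (symmetry; apply Nat.eqb_neq; lia). ring.
Qed.

Lemma Dcoef_ext n K : (n <= K)%nat -> sum_f_R0 (fun k => Qp k n) K = Dcoef c d p q n.
Proof.
  intros H. induction H; [reflexivity|]. rewrite tech5, IHle, (Qpow_low (S m) n) by lia. ring.
Qed.

Lemma Dcoef_ge K n : sum_f_R0 (fun k => Qp k n) K <= Dcoef c d p q n.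
Proof.
  destruct (le_lt_dec n K).
  - rewrite Dcoef_ext; auto. lra.
  - unfold Dcoef. apply sum_mono_N; [intros; apply Qpow_nonneg| lia].
Qed.

Lemma Dcoef_ge_a n : a n <= Dcoef c d p q n.
Proof.
  destruct n.
  - rewrite Ha0. unfold Dcoef. simpl. lra.
  - rewrite <- Qpow_1. eapply Rle_trans; [|apply (Dcoef_ge 1%nat)].
    change (Qp 1 (S n) <= Qp 0 (S n) + Qp 1 (S n)). pose proof (Qpow_nonneg 0 (S n)). lra.
Qed.

Lemma Qpow_series k : forall x, 0 <= x -> Rbar_lt x (CV_radius a) ->
  is_pseries (Qp k) x (PSeries a x ^ k).
Proof.
  induction k; intros x Hx HR.
  - apply is_pseries_R. apply is_series_Reals. intros eps Heps. exists 0%nat. intros n _.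
    replace (sum_f_R0 (fun n0 => Qp 0 n0 * x ^ n0) n) with 1.
    + unfold Rdist. simpl. rewrite Rminus_diag, Rabs_R0. lra.
    + induction n; [simpl; ring|]. rewrite tech5, <- IHn. simpl. ring.
  - destruct (rbar_between x _ Hx HR) as [y [Hxy HyR]].
    assert (Hy : is_pseries (Qp k) y (PSeries a y ^ k)) by (apply IHk; auto; lra).
    assert (Hrk : Rbar_le y (CV_radius (Qp k))).
    { apply radius_ge. exists (PSeries a y ^ k). intros n.
      apply is_pseries_R in Hy. rewrite Rabs_pos_eq.
      - apply term_le_series with (u := fun n => Qp k n * y ^ n); auto.
        intros m. apply Rmult_le_pos; [apply Qpow_nonneg| apply pow_le; lra].
      - apply Rmult_le_pos; [apply Qpow_nonneg| apply pow_le; lra]. }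
    assert (Hax : Rbar_lt (Rabs x) (CV_radius a)) by (rewrite Rabs_pos_eq; auto).
    assert (Hkx : Rbar_lt (Rabs x) (CV_radius (Qp k))).
    { rewrite Rabs_pos_eq by auto. destruct (CV_radius (Qp k)); simpl in *; auto; lra. }
    pose proof (is_pseries_mult a (Qp k) x _ _ (PSeries_correct _ _ (CV_radius_inside _ _ Hax))
                  (IHk x Hx HR) Hax Hkx) as M.
    eapply is_pseries_ext; [|exact M]. intros n. reflexivity.
Qed.

Lemma D_radius_ge x : 0 <= x -> Rbar_lt x (CV_radius a) -> PSeries a x < 1 ->
  Rbar_le x (CV_radius (Dcoef c d p q)).
Proof.
  intros Hx HR H1. apply radius_ge.
  assert (HQ0 : 0 <= PSeries a x).
  { apply series_nonneg with (u := fun n => a n * x ^ n).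
    - intros n; apply Rmult_le_pos; auto; apply pow_le; auto.
    - apply is_pseries_R. apply PSeries_correct, CV_radius_inside. rewrite Rabs_pos_eq; auto. }
  exists (/ (1 - PSeries a x)). intros N.
  rewrite Rabs_pos_eq.
  2:{ apply Rmult_le_pos; [apply cond_pos_sum; intros; apply Qpow_nonneg| apply pow_le; auto]. }
  unfold Dcoef. rewrite Rmult_comm, scal_sum.
  apply Rle_trans with (sum_f_R0 (fun k => PSeries a x ^ k) N).
  - apply sum_Rle. intros k Hk.
    pose proof (Qpow_series k x Hx HR) as S. apply is_pseries_R in S.
    apply term_le_series with (u := fun n => Qp k n * x ^ n); auto.
    intros m. apply Rmult_le_pos; [apply Qpow_nonneg| apply pow_le; lra].
  - rewrite tech3 by lra.
    assert (0 <= PSeries a x ^ S N) by (apply pow_le; auto).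
    unfold Rdiv. rewrite <- (Rmult_1_l (/ (1 - PSeries a x))) at 2. apply Rmult_le_compat_r; [left; apply Rinv_0_lt_compat; lra| lra].
Qed.

Lemma D_radius_le_a : Rbar_le (CV_radius (Dcoef c d p q)) (CV_radius a).
Proof.
  destruct (CV_radius_bounded (Dcoef c d p q)) as [_ H2]. apply H2.
  intros r [M HM]. destruct (CV_radius_bounded a) as [H1 _]. apply H1.
  exists M. intros n. eapply Rle_trans; [|apply (HM n)].
  rewrite !Rabs_mult. apply Rmult_le_compat_r; [apply Rabs_pos|].
  rewrite !Rabs_pos_eq; [apply Dcoef_ge_a| |auto].
  apply Rle_trans with (a n); auto. apply Dcoef_ge_a.
Qed.

Lemma D_radius_le r0 : 0 < r0 -> Rbar_lt r0 (CV_radius a) ->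
  is_series (fun n => a n * r0 ^ n) 1 -> Rbar_le (CV_radius (Dcoef c d p q)) r0.
Proof.
  intros Hr HR H1.
  destruct (Rbar_le_lt_dec (CV_radius (Dcoef c d p q)) r0) as [H|H]; auto. exfalso.
  assert (HD : ex_pseries (Dcoef c d p q) r0) by (apply CV_radius_inside; rewrite Rabs_pos_eq; auto; lra).
  apply PSeries_correct, is_pseries_R in HD.
  set (SD := PSeries (Dcoef c d p q) r0) in HD.
  assert (HQ : PSeries a r0 = 1).
  { rewrite PSeries_eq. rewrite <- (is_series_unique _ _ H1). apply Series_ext. intros n.
    change (r0 ^ n * a n = a n * r0 ^ n). ring. }
  assert (Hlim : forall K, is_lim_seq (fun N => sum_f_R0 (fun k => sum_f_R0 (fun n => Qp k n * r0 ^ n) N) K) (INR (S K))).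
  { intros K. induction K.
    - simpl. pose proof (Qpow_series 0 r0 ltac:(lra) HR) as S. apply is_pseries_R in S.
      rewrite HQ in S. simpl in S. apply is_lim_seq_Reals. apply is_series_Reals in S. exact S.
    - simpl (sum_f_R0 _ (S K)). rewrite S_INR.
      apply is_lim_seq_plus'.
      + apply IHK.
      + pose proof (Qpow_series (S K) r0 ltac:(lra) HR) as S. apply is_pseries_R in S.
        rewrite HQ, pow1 in S. apply is_lim_seq_Reals. apply is_series_Reals in S. exact S. }
  destruct (INR_unbounded SD) as [K HK]. specialize (Hlim K).
  assert (Hle : forall N, sum_f_R0 (fun k => sum_f_R0 (fun n => Qp k n * r0 ^ n) N) K <= SD).
  { intros N. rewrite <- sum_exchange.
    assert (HDn : forall n, 0 <= Dcoef c d p q n * r0 ^ n).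
    { intros n. apply Rmult_le_pos; [unfold Dcoef; apply cond_pos_sum; intros; apply Qpow_nonneg| apply pow_le; lra]. }
    eapply Rle_trans; [|apply (series_partial_le _ _ HDn HD N)].
    apply sum_Rle. intros n _. rewrite <- scal_sum. rewrite Rmult_comm.
    apply Rmult_le_compat_r; [apply pow_le; lra|]. apply Dcoef_ge. }
  pose proof (is_lim_seq_le _ _ _ _ Hle Hlim (is_lim_seq_const SD)) as L.
  assert (L2 : INR (S K) <= SD) by exact L. rewrite S_INR in L2. lra.
Qed.

End Dser.


Lemma sum_n_RtoC (u : nat -> R) N :
  sum_n (G := C_AbelianMonoid) (fun n => RtoC (u n)) N = RtoC (sum_n u N).
Proof.
  induction N.
  - rewrite !sum_O. reflexivity.
  - rewrite !sum_Sn, IHN. change (plus (RtoC (sum_n u N)) (RtoC (u (S N))) = RtoC (sum_n u N + u (S N))).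
    change (Cplus (RtoC (sum_n u N)) (RtoC (u (S N))) = RtoC (sum_n u N + u (S N))).
    rewrite RtoC_plus. reflexivity.
Qed.

Lemma Cmod_RtoC_minus (x y : R) : norm (K := C_AbsRing) (minus (RtoC x) (RtoC y)) = Rabs (x - y).
Proof.
  change (Cmod (Cminus (RtoC x) (RtoC y)) = Rabs (x - y)).
  rewrite <- RtoC_minus, Cmod_R. reflexivity.
Qed.

Lemma C_series_real (u : nat -> R) (l : R) :
  is_series (K := C_AbsRing) (V := C_NormedModule) (fun n => RtoC (u n)) (RtoC l) <-> is_series u l.
Proof.
  unfold is_series. split; intros H.
  - apply (filterlim_locally_ball_norm (K := R_AbsRing)). intros eps.
    apply (filterlim_locally_ball_norm (K := C_AbsRing)) with (eps := eps) in H.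
    revert H. apply filter_imp. intros N HN. unfold ball_norm in *.
    rewrite sum_n_RtoC, Cmod_RtoC_minus in HN. exact HN.
  - apply (filterlim_locally_ball_norm (K := C_AbsRing)). intros eps.
    apply (filterlim_locally_ball_norm (K := R_AbsRing)) with (eps := eps) in H.
    revert H. apply filter_imp. intros N HN. unfold ball_norm in *.
    rewrite sum_n_RtoC, Cmod_RtoC_minus. exact HN.
Qed.

Lemma pow_n_RtoC (x : R) n : pow_n (K := C_Ring) (RtoC x) n = RtoC (x ^ n).
Proof.
  induction n; [reflexivity|]. simpl. rewrite IHn.
  change (Cmult (RtoC x) (RtoC (x ^ n)) = RtoC (x * x ^ n)). rewrite RtoC_mult. reflexivity.
Qed.

Lemma Q_is_real c d p q (x l : R) :
  Q_is c d p q (RtoC x) (RtoC l) <-> is_series (fun n => Qcoef c d p q n * x ^ n) l.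
Proof.
  unfold Q_is. rewrite <- C_series_real.
  split; apply is_series_ext; intros n; rewrite pow_n_RtoC, RtoC_mult; reflexivity.
Qed.

Lemma Cmod_pow_n (z : C) n : Cmod (pow_n (K := C_Ring) z n) = Cmod z ^ n.
Proof.
  induction n; simpl.
  - change (Cmod (RtoC 1) = 1). rewrite Cmod_R, Rabs_R1. reflexivity.
  - change (Cmod (Cmult z (pow_n (K := C_Ring) z n)) = Cmod z * Cmod z ^ n).
    rewrite Cmod_mult, IHn. reflexivity.
Qed.

Lemma Cmod_sum_n (b : nat -> C) N :
  Cmod (sum_n (G := C_AbelianMonoid) b N) <= sum_f_R0 (fun n => Cmod (b n)) N.
Proof.
  induction N.
  - rewrite sum_O. simpl. lra.
  - rewrite sum_Sn. simpl. change (Cmod (Cplus (sum_n (G := C_AbelianMonoid) b N) (b (S N))) <=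
       sum_f_R0 (fun n => Cmod (b n)) N + Cmod (b (S N))).
    eapply Rle_trans; [apply Cmod_triangle|]. lra.
Qed.

Section CBounds.
Variables (c d : nat) (p : Z -> R) (q : R).
Notation a := (Qcoef c d p q).
Hypothesis Ha : forall n, 0 <= a n.

Lemma Cmod_term (z : C) n : Cmod (RtoC (a n) * pow_n (K := C_Ring) z n)%C = a n * Cmod z ^ n.
Proof. rewrite Cmod_mult, Cmod_R, Rabs_pos_eq, Cmod_pow_n; auto. Qed.

Lemma C_tri (z w : C) (l : R) : Q_is c d p q z w ->
  is_series (fun n => a n * Cmod z ^ n) l -> Cmod w <= l.
Proof.
  intros Hz Hl. destruct (Rle_lt_dec (Cmod w) l) as [H|H]; auto. exfalso.
  assert (Heps : 0 < Cmod w - l) by lra.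
  unfold Q_is, is_series in Hz.
  apply (filterlim_locally_ball_norm (K := C_AbsRing)) with (eps := mkposreal _ Heps) in Hz.
  destruct Hz as [N HN]. specialize (HN N (Nat.le_refl N)).
  unfold ball_norm in HN. simpl in HN.
  set (s := sum_n (G := C_AbelianMonoid) (fun n => (RtoC (a n) * pow_n (K := C_Ring) z n)%C) N) in *.
  change (Cmod (Cminus s w) < Cmod w - l) in HN.
  assert (H1 : Cmod s <= l).
  { assert (Hnn : forall n, 0 <= a n * Cmod z ^ n).
    { intros n. apply Rmult_le_pos; auto. apply pow_le, Cmod_ge_0. }
    eapply Rle_trans; [apply Cmod_sum_n|].
    eapply Rle_trans; [|apply (series_partial_le _ _ Hnn Hl N)].
    right. apply sum_eq. intros i _. apply Cmod_term. }
  assert (H2 : Cmod w <= Cmod s + Cmod (Cminus s w)).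
  { replace w with (Cminus s (Cminus s w)) at 1 by ring.
    unfold Cminus. eapply Rle_trans; [apply Cmod_triangle|]. rewrite Cmod_opp. lra. }
  lra.
Qed.

Lemma C_bound (z w : C) : Q_is c d p q z w -> Rbar_le (Cmod z) (CV_radius a).
Proof.
  intros Hz. apply radius_ge.
  unfold Q_is, is_series in Hz.
  apply (filterlim_locally_ball_norm (K := C_AbsRing)) with (eps := mkposreal 1 Rlt_0_1) in Hz.
  destruct Hz as [N HN].
  set (b := fun n => (RtoC (a n) * pow_n (K := C_Ring) z n)%C).
  exists (2 + sum_f_R0 (fun n => Cmod (b n)) N). intros n.
  rewrite Rabs_pos_eq by (apply Rmult_le_pos; auto; apply pow_le, Cmod_ge_0).
  rewrite <- (Cmod_term z n). fold (b n).
  assert (Hs : 0 <= sum_f_R0 (fun n => Cmod (b n)) N) by (apply cond_pos_sum; intros; apply Cmod_ge_0).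
  destruct (le_lt_dec n N).
  - assert (Cmod (b n) <= sum_f_R0 (fun n => Cmod (b n)) N) by (apply (sum_ge_term (fun n => Cmod (b n))); auto; intros; apply Cmod_ge_0).
    lra.
  - destruct n; [lia|].
    pose proof (HN (S n) ltac:(lia)) as H1. pose proof (HN n ltac:(lia)) as H2.
    unfold ball_norm in H1, H2. simpl in H1, H2.
    change (Cmod (Cminus (sum_n (G := C_AbelianMonoid) b (S n)) w) < 1) in H1.
    change (Cmod (Cminus (sum_n (G := C_AbelianMonoid) b n) w) < 1) in H2.
    rewrite sum_Sn in H1.
    change (Cmod (Cminus (Cplus (sum_n (G := C_AbelianMonoid) b n) (b (S n))) w) < 1) in H1.
    set (s := sum_n (G := C_AbelianMonoid) b n) in *.
    assert (Cmod (b (S n)) <= Cmod (Cminus (Cplus s (b (S n))) w) + Cmod (Cminus s w)).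
    { replace (b (S n)) with (Cminus (Cminus (Cplus s (b (S n))) w) (Cminus s w)) at 1 by ring.
      unfold Cminus at 1. eapply Rle_trans; [apply Cmod_triangle|]. rewrite Cmod_opp. lra. }
    lra.
Qed.

End CBounds.


Lemma ln_1px x : 0 < x -> ln (1 + x) <= x.
Proof.
  intros Hx. rewrite <- (ln_exp x) at 2. left. apply ln_increasing; [lra|].
  apply exp_ineq1. lra.
Qed.

Lemma harm_ln N : ln (INR N + 2) <= sum_f_R0 (fun n => / (INR n + 1)) N.
Proof.
  induction N.
  - simpl. replace (0 + 2) with (1 + 1) by ring. replace (/ (0 + 1)) with 1 by field.
    apply ln_1px. lra.
  - rewrite tech5, S_INR.
    pose proof (pos_INR N).
    replace (INR N + 1 + 2) with ((INR N + 2) * (1 + / (INR N + 2))) by (field; lra).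
    assert (0 < / (INR N + 2)) by (apply Rinv_0_lt_compat; lra).
    rewrite ln_mult by lra.
    replace (INR N + 1 + 1) with (INR N + 2) by ring.
    assert (ln (1 + / (INR N + 2)) <= / (INR N + 2)) by (apply ln_1px; apply Rinv_0_lt_compat; lra).
    lra.
Qed.

Lemma harm_unbounded B : exists N, B < sum_f_R0 (fun n => / (INR n + 1)) N.
Proof.
  destruct (INR_unbounded (exp B)) as [N HN]. exists N.
  eapply Rlt_le_trans; [|apply harm_ln].
  rewrite <- (ln_exp B) at 1. apply ln_increasing; [apply exp_pos|]. lra.
Qed.

Lemma sum_shift_ge (f : nat -> R) N k : (forall n, 0 <= f n) ->
  sum_f_R0 (fun n => f (n + k)%nat) N <= sum_f_R0 f (N + k).
Proof.
  intros Hf. induction N.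
  - simpl. apply sum_ge_term; auto.
  - rewrite tech5. simpl (S N + k)%nat. rewrite tech5. lra.
Qed.

Lemma rbar_eq_finite (R : Rbar) r0 : 0 <= r0 -> Rbar_le R r0 -> Rbar_le 0 R ->
  (forall x, 0 <= x < r0 -> Rbar_le x R) -> R = Finite r0.
Proof.
  intros H0 H1 H2 H3. destruct R as [R| |]; simpl in *; try contradiction.
  f_equal. destruct (Rle_lt_dec r0 R); [lra|].
  specialize (H3 ((R + r0) / 2) ltac:(lra)). simpl in H3. lra.
Qed.

Section Main.
Variables (c d : nat) (p : Z -> R) (q tau : R).
Hypothesis Hc : (1 <= c)%nat.
Hypothesis Hd : (1 <= d)%nat.
Hypothesis Hp : forall i : Z, (- Z.of_nat c <= i <= Z.of_nat d)%Z -> 0 <= p i.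
Hypothesis Hpc : p (- Z.of_nat c)%Z <> 0.
Hypothesis Hpd : p (Z.of_nat d) <> 0.
Hypothesis Hq : 0 < q.
Hypothesis Ht : 0 < tau.
Hypothesis HP't : Pjump' c d p tau = 0.

Notation a := (Qcoef c d p q).
Notation P1 := (Pjump c d p 1).
Notation Pt := (Pjump c d p tau).
Notation RQ := (CV_radius (Qcoef c d p q)).

Lemma Ha : forall n, 0 <= a n.
Proof. intros n. apply Qcoef_nonneg; auto; lra. Qed.

Lemma Ha0 : a 0%nat = 0.
Proof. reflexivity. Qed.

Lemma Hpd_pos : 0 < p (Z.of_nat d).
Proof. assert (0 <= p (Z.of_nat d)) by (apply Hp; lia). lra. Qed.

Lemma Hk0 : 0 < a (S (0 + S c)).
Proof.
  eapply Rlt_le_trans; [|apply Qcoef_lower; auto; lra].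
  simpl V. rewrite Rmult_1_r. apply Rmult_lt_0_compat; auto. apply pow_lt, Hpd_pos.
Qed.

Lemma Pt_pos : 0 < Pt.
Proof. apply P_pos; auto. Qed.

Lemma P1_pos : 0 < P1.
Proof. apply P_pos; auto; lra. Qed.

Lemma Pt_le_P1 : Pt <= P1.
Proof.
  destruct (Req_dec tau 1) as [E|E]; [rewrite E; lra|].
  pose proof (P_convex c d p Hc Hd Hp Hpc 1 tau ltac:(lra) Ht ltac:(auto)) as H.
  rewrite HP't in H. lra.
Qed.

Lemma RQ_ge_P1 : Rbar_le (/ P1) RQ.
Proof.
  pose proof P1_pos. apply radius_ge. exists (q / P1). intros n.
  rewrite Rabs_pos_eq by (apply Rmult_le_pos; [apply Ha| apply pow_le; left; apply Rinv_0_lt_compat; auto]).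
  destruct n.
  - simpl. apply Rlt_le. rewrite Rmult_0_l. apply Rdiv_lt_0_compat; auto.
  - eapply Rle_trans.
    + apply Rmult_le_compat_r; [apply pow_le; left; apply Rinv_0_lt_compat; auto|].
      apply Qcoef_upper; auto; lra.
    + rewrite <- Rinv_pow by lra. simpl. assert (P1 ^ n <> 0) by (apply pow_nonzero; lra). right. field. split; lra.
Qed.

Definition ser (x l : R) := is_series (fun n => a n * x ^ n) l.

Lemma Z_real r : 0 < r -> Zset c d p q (/ Pt) (RtoC r) -> ser r 1.
Proof.
  intros Hr [[_ HQ] _]. unfold ser. apply Q_is_real. exact HQ.
Qed.

Lemma zero_ser r : 0 <= r -> ser r 1 -> 0 < r.
Proof.
  intros Hr H. destruct (Req_dec r 0) as [E|E]; [|lra]. subst r. exfalso.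
  assert (H0 : ser 0 0).
  { unfold ser. apply is_series_Reals. intros eps Heps. exists 0%nat. intros n _.
    replace (sum_f_R0 (fun n => a n * 0 ^ n) n) with 0.
    - unfold Rdist. rewrite Rminus_diag, Rabs_R0. lra.
    - induction n; simpl; [try rewrite Ha0; ring| rewrite <- IHn; ring]. }
  unfold ser in *. apply is_series_unique in H. apply is_series_unique in H0. lra.
Qed.

Lemma exists_partial s l : ser s l -> 1 < l -> exists N, 1 < sum_f_R0 (fun n => a n * s ^ n) N.
Proof.
  intros H Hl. apply is_series_Reals in H. destruct (H (l - 1) ltac:(lra)) as [N HN].
  exists N. specialize (HN N (Nat.le_refl N)). unfold Rdist in HN.
  apply Rabs_def2 in HN. lra.
Qed.

Lemma not_ex_partial s : 0 <= s -> ~ ex_series (fun n => a n * s ^ n) ->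
  exists N, 1 < sum_f_R0 (fun n => a n * s ^ n) N.
Proof.
  intros Hs H. apply NNPP. intros Hn. apply H.
  destruct (growing_cv (sum_f_R0 (fun n => a n * s ^ n))) as [l Hl].
  - unfold Un_growing. intros n. rewrite tech5. pose proof (terms_nonneg a Ha s Hs (S n)). lra.
  - exists 1. intros x [N HN]. subst x. destruct (Rle_lt_dec (sum_f_R0 (fun n => a n * s ^ n) N) 1); auto.
    exfalso. apply Hn. exists N. auto.
  - exists l. apply is_series_Reals. exact Hl.
Qed.

Lemma real_zero_from z : zero_le c d p q (/ Pt) z ->
  exists r, 0 < r <= Cmod z /\ ser r 1.
Proof.
  intros [Hz HQ]. set (s := Cmod z).
  assert (Hs0 : 0 <= s) by apply Cmod_ge_0.
  assert (HsR : Rbar_le s RQ) by (apply (C_bound c d p q Ha z (RtoC 1) HQ)).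
  assert (Hivt : (exists N, 1 < sum_f_R0 (fun n => a n * s ^ n) N) -> exists r, 0 < r <= s /\ ser r 1).
  { intros [N HN]. assert (Hs : 0 < s).
    { destruct (Req_dec s 0) as [E|E]; [|lra]. exfalso. rewrite E in HN.
      replace (sum_f_R0 (fun n => a n * 0 ^ n) N) with 0 in HN; [lra|].
      clear HN. induction N; simpl; [try rewrite Ha0; ring| rewrite <- IHN; ring]. }
    destruct (ivt_zero a Ha Ha0 s N Hs HsR HN) as [r [Hr1 Hr2]].
    exists r. split; [lra| exact Hr2]. }
  destruct (classic (ex_series (fun n => a n * s ^ n))) as [[l Hl]|Hn].
  - pose proof (C_tri c d p q Ha z (RtoC 1) l HQ Hl) as T. rewrite Cmod_1 in T.
    destruct (Req_dec l 1) as [E|E].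
    + subst l. exists s. split; [split; [apply zero_ser; auto| lra]| exact Hl].
    + apply Hivt. apply (exists_partial s l); auto. lra.
  - apply Hivt. apply not_ex_partial; auto.
Qed.

Lemma Z_char r0 : 0 < r0 -> r0 <= / Pt -> ser r0 1 ->
  Zset c d p q (/ Pt) (RtoC r0) /\
  (forall r, 0 < r -> Zset c d p q (/ Pt) (RtoC r) -> r = r0).
Proof.
  intros Hr0 Hr0r H1.
  assert (HZ : Zset c d p q (/ Pt) (RtoC r0)).
  { split.
    - split; [rewrite Cmod_R, Rabs_pos_eq; lra|]. apply Q_is_real. exact H1.
    - intros w Hw. destruct (real_zero_from w Hw) as [r [Hr Hrs]].
      rewrite Cmod_R, Rabs_pos_eq by lra.
      destruct (Rle_lt_dec r0 r); [lra|].
      exfalso. pose proof (strict_mono a Ha Ha0 _ Hk0 r r0 1 1 ltac:(lra) Hrs H1). lra. }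
  split; auto.
  intros r Hr HZr. pose proof (Z_real r Hr HZr) as Hs.
  destruct (Rtotal_order r r0) as [Hlt|[Heq|Hgt]]; auto; exfalso.
  - pose proof (strict_mono a Ha Ha0 _ Hk0 r r0 1 1 ltac:(lra) Hs H1). lra.
  - pose proof (strict_mono a Ha Ha0 _ Hk0 r0 r 1 1 ltac:(lra) H1 Hs). lra.
Qed.

Lemma PS_ser x : 0 <= x -> Rbar_lt x RQ -> ser x (PSeries a x).
Proof.
  intros Hx HR. unfold ser. apply is_pseries_R, PSeries_correct, CV_radius_inside.
  rewrite Rabs_pos_eq; auto.
Qed.

Lemma rhoD_eq r0 : 0 < r0 -> Rbar_lt r0 RQ -> ser r0 1 -> CV_radius (Dcoef c d p q) = Finite r0.
Proof.
  intros Hr HR H1. apply rbar_eq_finite; [lra| |apply CV_radius_ge_0|].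
  - apply D_radius_le; [apply Ha| apply Ha0| exact Hr| exact HR| exact H1].
  - intros x Hx. apply D_radius_ge; [apply Ha| lra| |].
    + destruct RQ; simpl in *; auto; lra.
    + apply (strict_mono a Ha Ha0 _ Hk0 x r0 _ 1 Hx); auto.
      apply PS_ser; [lra|]. destruct RQ; simpl in *; auto; lra.
Qed.

Lemma Pt_inv_le : / P1 <= / Pt.
Proof. apply Rinv_le_contravar; [apply Pt_pos| apply Pt_le_P1]. Qed.

Lemma term_lower_drift : 0 <= Pjump' c d p 1 -> forall n,
  q * p (Z.of_nat d) ^ (S c) / (P1 ^ (S (S c)) * INR d) * / (INR n + 1)
    <= a (S (n + S c)) * (/ P1) ^ (S (n + S c)).
Proof.
  intros Hdel n.
  pose proof P1_pos as HP1. pose proof Hpd_pos as Hpd'.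
  set (W := V c d p n (fun _ => 1) 0%Z).
  assert (H1 : q * p (Z.of_nat d) ^ S c * W <= a (S (n + S c))) by (apply Qcoef_lower; auto; lra).
  assert (H2 : P1 ^ n <= (INR n * INR d + 1) * W) by (apply W_lower_drift; auto).
  assert (HdR : 1 <= INR d) by (replace 1 with (INR 1) by reflexivity; apply le_INR; auto).
  assert (Hn0 : 0 <= INR n) by apply pos_INR.
  assert (HPn : 0 < P1 ^ n) by (apply pow_lt; auto).
  assert (HPc : 0 < P1 ^ S (S c)) by (apply pow_lt; auto).
  set (K := q * p (Z.of_nat d) ^ S c).
  assert (HK : 0 < K) by (unfold K; apply Rmult_lt_0_compat; auto; apply pow_lt; auto).
  assert (HW : P1 ^ n / (INR n * INR d + 1) <= W).
  { apply Rmult_le_reg_l with (INR n * INR d + 1); [nra|].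
    field_simplify; [lra| nra]. }
  rewrite <- Rinv_pow by lra.
  replace (S (n + S c)) with (n + S (S c))%nat by lia. rewrite pow_add.
  apply Rle_trans with (K * W * / (P1 ^ n * P1 ^ S (S c))).
  2:{ apply Rmult_le_compat_r; [left; apply Rinv_0_lt_compat; nra|].
      replace (n + S (S c))%nat with (S (n + S c)) by lia. exact H1. }
  apply Rle_trans with (K * (P1 ^ n / (INR n * INR d + 1)) * / (P1 ^ n * P1 ^ S (S c))).
  2:{ apply Rmult_le_compat_r; [left; apply Rinv_0_lt_compat; nra|]. apply Rmult_le_compat_l; lra. }
  assert (E : K * (P1 ^ n / (INR n * INR d + 1)) * / (P1 ^ n * P1 ^ S (S c))
      = K / (P1 ^ S (S c)) * / (INR n * INR d + 1)) by (field; split; [nra| lra]).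
  rewrite E. unfold K. unfold Rdiv.
  rewrite Rinv_mult, !Rmult_assoc. repeat apply Rmult_le_compat_l.
  all: try (left; auto; fail).
  all: try (apply pow_le; lra).
  all: try (left; apply Rinv_0_lt_compat; auto; fail).
  rewrite <- Rinv_mult. apply Rinv_le_contravar; [nra|]. nra.
Qed.

Lemma case_pos : 0 <= Pjump' c d p 1 -> exists rho0, 0 < rho0 /\ Zset c d p q (/ Pt) (RtoC rho0) /\
  CV_radius (Dcoef c d p q) = Finite rho0 /\ rho0 < / P1 /\ / P1 <= / Pt.
Proof.
  intros Hdel. pose proof P1_pos as HP1. pose proof Hpd_pos as Hpd'.
  set (C0 := q * p (Z.of_nat d) ^ (S c) / (P1 ^ (S (S c)) * INR d)).
  assert (HdR : 1 <= INR d) by (replace 1 with (INR 1) by reflexivity; apply le_INR; auto).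
  assert (HC0 : 0 < C0).
  { unfold C0. apply Rdiv_lt_0_compat; [apply Rmult_lt_0_compat; auto; apply pow_lt; auto|].
    apply Rmult_lt_0_compat; [apply pow_lt; auto| lra]. }
  destruct (harm_unbounded (/ C0)) as [N HN].
  assert (Hs : 0 < / P1) by (apply Rinv_0_lt_compat; auto).
  assert (Hpart : 1 < sum_f_R0 (fun n => a n * (/ P1) ^ n) (N + S (S c))).
  { eapply Rlt_le_trans; [|apply sum_shift_ge; apply terms_nonneg; [apply Ha| lra]].
    eapply Rlt_le_trans with (sum_f_R0 (fun n => C0 * / (INR n + 1)) N).
    - assert (E : sum_f_R0 (fun n => C0 * / (INR n + 1)) N = C0 * sum_f_R0 (fun n => / (INR n + 1)) N)
        by (rewrite scal_sum; apply sum_eq; intros; ring).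
      rewrite E. apply Rmult_lt_reg_l with (/ C0); [apply Rinv_0_lt_compat; auto|].
      rewrite <- Rmult_assoc, Rinv_l, Rmult_1_l, Rmult_1_r by lra. exact HN.
    - apply sum_Rle. intros n _. replace (n + S (S c))%nat with (S (n + S c)) by lia.
      apply term_lower_drift; auto. }
  destruct (ivt_zero a Ha Ha0 (/ P1) _ Hs RQ_ge_P1 Hpart) as [r0 [[Hr0 Hr0s] H1]].
  pose proof Pt_inv_le as Hle.
  exists r0. split; [auto|]. split; [apply Z_char; auto; lra|].
  split; [|split; auto].
  apply rhoD_eq; auto. pose proof RQ_ge_P1 as HR. destruct RQ; simpl in *; auto; lra.
Qed.

Lemma tau_gt1 : Pjump' c d p 1 < 0 -> 1 < tau /\ Pt < P1.
Proof.
  intros Hdel. assert (Hne : tau <> 1) by (intros E; rewrite E in HP't; lra).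
  pose proof (P_convex c d p Hc Hd Hp Hpc 1 tau ltac:(lra) Ht ltac:(auto)) as H1.
  pose proof (P_convex c d p Hc Hd Hp Hpc tau 1 Ht ltac:(lra) Hne) as H2.
  rewrite HP't in H1. split; [|lra]. nra.
Qed.

Lemma sum_f_R0_S (f : nat -> R) N : sum_f_R0 f (S N) = f 0%nat + sum_f_R0 (fun i => f (S i)) N.
Proof. induction N; simpl; [ring|]. simpl in IHN. rewrite IHN. ring. Qed.

Lemma Qrho_conv : Pjump' c d p 1 < 0 -> exists Qr, ser (/ Pt) Qr.
Proof.
  intros Hdel. destruct (tau_gt1 Hdel) as [Ht1 HPl].
  pose proof Pt_pos as HPt.
  set (B := powerRZ tau (Z.of_nat c) * (INR c + 1) - 1).
  assert (HS : forall N, sum_f_R0 (fun m => / Pt ^ (S m) * V c d p m (fun _ => 1) 0%Z) N <= B / (P1 - Pt)).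
  { intros N. pose proof (M_summable c d p Hc Hd Hp Hpc tau Ht1 HP't HPl N) as M.
    apply Rmult_le_reg_l with (P1 - Pt); [lra|].
    replace ((P1 - Pt) * (B / (P1 - Pt))) with B by (field; lra). fold B in M. lra. }
  assert (Hnn : forall n, 0 <= a n * (/ Pt) ^ n) by (apply terms_nonneg; [apply Ha| left; apply Rinv_0_lt_compat; auto]).
  assert (Hb : forall N, sum_f_R0 (fun n => a n * (/ Pt) ^ n) N <= q * (B / (P1 - Pt))).
  { intros N. apply Rle_trans with (sum_f_R0 (fun n => a n * (/ Pt) ^ n) (S N)).
    - rewrite tech5. specialize (Hnn (S N)). lra.
    - rewrite sum_f_R0_S. cbv beta. rewrite Ha0, Rmult_0_l, Rplus_0_l.
      eapply Rle_trans; [|apply Rmult_le_compat_l; [lra| apply (HS N)]].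
      rewrite scal_sum. apply sum_Rle. intros m _.
      rewrite <- Rinv_pow by lra.
      assert (0 < / Pt ^ S m) by (apply Rinv_0_lt_compat, pow_lt; auto).
      pose proof (Qcoef_bounds c d p Hc Hd Hp q m ltac:(lra)) as [_ Hu].
      replace (/ Pt ^ S m * V c d p m (fun _ => 1) 0%Z * q) with ((q * V c d p m (fun _ => 1) 0%Z) * / Pt ^ S m) by ring.
      apply Rmult_le_compat_r; lra. }
  destruct (growing_cv (sum_f_R0 (fun n => a n * (/ Pt) ^ n))) as [l Hl].
  - unfold Un_growing. intros n. rewrite tech5. specialize (Hnn (S n)). lra.
  - exists (q * (B / (P1 - Pt))). intros x [N HN]. subst x. apply Hb.
  - exists l. unfold ser. apply is_series_Reals. exact Hl.
Qed.

Lemma ser_radius x l : 0 <= x -> ser x l -> Rbar_le x RQ.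
Proof.
  intros Hx H. apply radius_ge. exists l. intros n.
  rewrite Rabs_pos_eq by (apply terms_nonneg; [apply Ha| auto]).
  apply term_le_series with (u := fun n => a n * x ^ n); auto.
  apply terms_nonneg; [apply Ha| auto].
Qed.

Lemma RQ_le_rho : Rbar_le RQ (/ Pt).
Proof.
  pose proof Pt_pos as HPt. pose proof Hpd_pos as Hpd'.
  apply radius_le. intros r [M HM].
  destruct (Rle_lt_dec r (/ Pt)) as [H|H]; auto. exfalso.
  assert (Hr : 0 < r) by (assert (0 < / Pt) by (apply Rinv_0_lt_compat; auto); lra).
  assert (Hir : / r < Pt).
  { rewrite <- (Rinv_inv Pt). apply Rinv_lt_contravar; auto. apply Rmult_lt_0_compat; auto. apply Rinv_0_lt_compat; auto. }
  set (lam := (/ r + Pt) / 2).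
  assert (Hl0 : 0 <= lam) by (unfold lam; assert (0 < / r) by (apply Rinv_0_lt_compat; auto); lra).
  assert (Hlt : lam < Pt) by (unfold lam; lra).
  assert (Hlr : 1 < lam * r).
  { unfold lam. apply Rmult_lt_reg_l with (/ r); [apply Rinv_0_lt_compat; auto|].
    replace (/ r * ((/ r + Pt) / 2 * r)) with ((/ r + Pt) / 2) by (field; lra).
    rewrite Rmult_1_r. lra. }
  destruct (W_lower_exp c d p Hc Hd Hp tau lam Ht HP't Hl0 Hlt) as [C [HC HCn]].
  set (K0 := q * p (Z.of_nat d) ^ S c * C * r ^ S (S c)).
  assert (HK0 : 0 < K0).
  { unfold K0. repeat apply Rmult_lt_0_compat; auto; apply pow_lt; auto. }
  assert (Hbound : forall n, K0 * (lam * r) ^ n <= M).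
  { intros n. specialize (HM (S (n + S c))).
    rewrite Rabs_pos_eq in HM by (apply terms_nonneg; [apply Ha| lra]).
    eapply Rle_trans; [|exact HM].
    pose proof (Qcoef_lower c d p Hc Hd Hp q n ltac:(lra)) as HL.
    specialize (HCn n).
    replace (S (n + S c)) with (n + S (S c))%nat by lia. rewrite pow_add.
    replace (n + S (S c))%nat with (S (n + S c)) by lia.
    assert (0 < q * p (Z.of_nat d) ^ S c) by (apply Rmult_lt_0_compat; auto; apply pow_lt; auto).
    assert (q * p (Z.of_nat d) ^ S c * (C * lam ^ n) <= a (S (n + S c))).
    { eapply Rle_trans; [|exact HL]. apply Rmult_le_compat_l; lra. }
    assert (0 < r ^ n) by (apply pow_lt; auto).
    assert (0 < r ^ S (S c)) by (apply pow_lt; auto).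
    unfold K0. rewrite Rpow_mult_distr.
    replace (q * p (Z.of_nat d) ^ S c * C * r ^ S (S c) * (lam ^ n * r ^ n))
      with ((q * p (Z.of_nat d) ^ S c * (C * lam ^ n)) * (r ^ n * r ^ S (S c))) by ring.
    apply Rmult_le_compat_r; [nra| auto]. }
  destruct (INR_unbounded (M / (K0 * (lam * r - 1)))) as [n Hn].
  specialize (Hbound n). pose proof (bern_nat n (lam * r) ltac:(lra)) as Bn.
  assert (HKl : 0 < K0 * (lam * r - 1)) by (apply Rmult_lt_0_compat; lra).
  assert (M < K0 * (lam * r - 1) * INR n).
  { apply Rmult_lt_reg_l with (/ (K0 * (lam * r - 1))); [apply Rinv_0_lt_compat; auto|].
    rewrite <- Rmult_assoc, Rinv_l, Rmult_1_l by lra. rewrite Rmult_comm. exact Hn. }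
  assert (K0 * (1 + INR n * (lam * r - 1)) <= K0 * (lam * r) ^ n) by (apply Rmult_le_compat_l; lra).
  nra.
Qed.

Lemma Qreal_eq x l : ser x l -> Qreal c d p q x = Finite l.
Proof.
  intros H. unfold Qreal. apply is_lim_seq_unique. apply is_lim_seq_Reals.
  apply is_series_Reals in H. exact H.
Qed.

Lemma case_neg : Pjump' c d p 1 < 0 ->
  let rho := / Pt in
  let rhoD := CV_radius (Dcoef c d p q) in
  let Z := Zset c d p q rho in
     (Rbar_lt (Finite 1) (Qreal c d p q rho) <->
        exists rho0, 0 < rho0 /\ Z (RtoC rho0) /\ rhoD = Finite rho0 /\ rho0 < rho) /\
     (Qreal c d p q rho = Finite 1 <->
        exists rho0, 0 < rho0 /\ Z (RtoC rho0) /\ rhoD = Finite rho0 /\ rho0 = rho) /\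
     (Rbar_lt (Qreal c d p q rho) (Finite 1) <->
        rhoD = Finite rho /\ forall z, ~ Z z).
Proof.
  intros Hdel rho rhoD Z.
  pose proof Pt_pos as HPt.
  assert (Hrho : 0 < rho) by (apply Rinv_0_lt_compat; auto).
  destruct (Qrho_conv Hdel) as [Qr HQr].
  change (ser rho Qr) in HQr. rewrite (Qreal_eq _ _ HQr).
  assert (HR1 : Rbar_le rho RQ) by (apply (ser_radius rho Qr); auto; lra).
  pose proof RQ_le_rho as HR2. fold rho in HR2.
  assert (Hlt_x : forall x, 0 <= x < rho -> Rbar_lt x RQ).
  { intros x Hx. destruct RQ; simpl in *; auto; lra. }
  assert (Hgt : 1 < Qr -> exists rho0, 0 < rho0 /\ Z (RtoC rho0) /\ rhoD = Finite rho0 /\ rho0 < rho).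
  { intros H. destruct (exists_partial rho Qr HQr H) as [N HN].
    destruct (ivt_zero a Ha Ha0 rho N Hrho HR1 HN) as [r0 [[Hr0 Hr0s] H1]].
    exists r0. split; auto. split; [apply Z_char; auto; unfold rho in *; lra|]. split; auto.
    apply rhoD_eq; auto. apply Hlt_x. lra. }
  assert (Hle1 : Qr <= 1 -> rhoD = Finite rho).
  { intros H. apply rbar_eq_finite; [lra| |apply CV_radius_ge_0|].
    - eapply Rbar_le_trans; [apply D_radius_le_a; [apply Ha| apply Ha0]|]. auto.
    - intros x Hx. apply D_radius_ge; [apply Ha| lra| apply Hlt_x; auto|].
      pose proof (strict_mono a Ha Ha0 _ Hk0 x rho _ _ Hx (PS_ser x ltac:(lra) (Hlt_x x Hx)) HQr). lra. }
  assert (Hzr : forall r0, 0 < r0 -> Z (RtoC r0) -> ser r0 1 /\ r0 <= rho).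
  { intros r0 Hr0 HZ. split; [apply Z_real; auto|]. destruct HZ as [[Hm _] _].
    rewrite Cmod_R, Rabs_pos_eq in Hm; lra. }
  assert (Hless : forall r0, 0 < r0 -> ser r0 1 -> r0 < rho -> 1 < Qr).
  { intros r0 Hr0 H1 Hlt. apply (strict_mono a Ha Ha0 _ Hk0 r0 rho 1 Qr); auto; lra. }
  assert (Heq : ser rho 1 -> Qr = 1).
  { intros H1. unfold ser in *. apply is_series_unique in H1. apply is_series_unique in HQr. lra. }
  split; [|split].
  - split.
    + simpl. apply Hgt.
    + intros [r0 [Hr0 [HZ [_ Hlt]]]]. simpl. destruct (Hzr r0 Hr0 HZ) as [H1 _]. eapply Hless; eauto.
  - split.
    + intros H. injection H as H. exists rho. split; auto. split; [apply Z_char; [exact Hrho| apply Rle_refl| rewrite <- H; exact HQr]|].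
      split; auto. apply Hle1. lra.
    + intros [r0 [Hr0 [HZ [_ E]]]]. subst r0. f_equal. apply Heq. apply Hzr; auto.
  - split.
    + simpl. intros H. split; [apply Hle1; lra|].
      intros z HZz. destruct HZz as [Hzl _]. destruct (real_zero_from z Hzl) as [r [Hr H1]].
      destruct Hzl as [Hzr' _]. destruct (Rle_lt_dec rho r).
      * assert (r = rho) by (unfold rho in *; lra). subst r. apply Heq in H1. lra.
      * pose proof (Hless r ltac:(lra) H1 ltac:(lra)). lra.
    + intros [HD HE]. simpl. destruct (Rlt_le_dec Qr 1) as [H|H]; auto. exfalso.
      destruct (Rle_lt_dec Qr 1) as [H'|H'].
      * assert (Qr = 1) by lra. subst Qr. apply (HE (RtoC rho)). apply Z_char; [exact Hrho| apply Rle_refl| exact HQr].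
      * destruct (Hgt H') as [r0 [_ [HZ _]]]. apply (HE _ HZ).
Qed.

End Main.

Theorem lemma4p2 (c d : nat) (p : Z -> R) (q tau : R) :
  (1 <= c)%nat -> (1 <= d)%nat ->
  (forall i : Z, (- Z.of_nat c <= i <= Z.of_nat d)%Z -> 0 <= p i) ->
  p (- Z.of_nat c)%Z <> 0 -> p (Z.of_nat d) <> 0 ->
  aperiodic c d p ->
  0 < q ->
  (* tau = minimal positive real root of P' *)
  0 < tau -> Pjump' c d p tau = 0 ->
  (forall t, 0 < t < tau -> Pjump' c d p t <> 0) ->
  let rho := / Pjump c d p tau in
  let delta := Pjump' c d p 1 in
  let rhoD := CV_radius (Dcoef c d p q) in
  let Z := Zset c d p q rho in
  (* Z is empty or has exactly one real positive element *)
  ((forall z, ~ Z z) \/ (exists! r : R, 0 < r /\ Z (RtoC r))) /\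
  (0 <= delta ->
     exists rho0, 0 < rho0 /\ Z (RtoC rho0) /\ rhoD = Finite rho0 /\
       rho0 < / Pjump c d p 1 /\ / Pjump c d p 1 <= rho) /\
  (delta < 0 ->
     (Rbar_lt (Finite 1) (Qreal c d p q rho) <->
        exists rho0, 0 < rho0 /\ Z (RtoC rho0) /\ rhoD = Finite rho0 /\ rho0 < rho) /\
     (Qreal c d p q rho = Finite 1 <->
        exists rho0, 0 < rho0 /\ Z (RtoC rho0) /\ rhoD = Finite rho0 /\ rho0 = rho) /\
     (Rbar_lt (Qreal c d p q rho) (Finite 1) <->
        rhoD = Finite rho /\ forall z, ~ Z z)).
Proof.
  intros Hc Hd Hp Hpc Hpd Hap Hq Ht HP't Hmin rho delta rhoD Z.
  split; [|split].
  - destruct (classic (exists r0, 0 < r0 /\ r0 <= rho /\ ser c d p q r0 1)) as [[r0 [H1 [H2 H3]]]|Hn].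
    + right. destruct (Z_char c d p q tau Hc Hd Hp Hpd Hq r0 H1 H2 H3) as [HZ HU].
      exists r0. split; [split; auto|]. intros r [Hr HZr]. symmetry. apply HU; auto.
    + left. intros z HZz. destruct HZz as [Hzl _].
      destruct (real_zero_from c d p q tau Hc Hd Hp Hq z Hzl) as [r [Hr H1]].
      apply Hn. exists r. destruct Hzl as [Hzl _]. split; [lra| split; [lra| auto]].
  - intros Hdel. apply case_pos; auto.
  - intros Hdel. apply case_neg; auto.
Qed.
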